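(* Assume, in addition to the setting below, that at least one of the following holds: (H1) $f$ is differentiable on $\mathbb{R}^m$ with $L$-Lipschitz continuous gradient for some $L>0$; (H2) the restriction of $A$ to $\mathcal{M}(\Omega_0)$ is surjective onto $\mathbb{R}^m$. Then there is a subsequence of $(\mu_k,q_k)_{k\in\mathbb{N}}$ along which $\mu_k$ converges weak-$*$ (in $\mathcal{M}(\Omega)=\mathcal{C}_0(\Omega)^*$) to some $\mu_\infty$ and $q_k$ converges in $\mathbb{R}^m$ to some $q_\infty$, where $\mu_\infty$ solves $(\mathcal{P})$, $q_\infty$ solves $(\mathcal{D})$, and $J(\mu_k)\to J(\mu_\infty)=\inf(\mathcal{P})$ along this subsequence. If the solution of $(\mathcal{P})$ (respectively of $(\mathcal{D})$) is unique, then the whole sequence $(\mu_k)$ (respectively $(q_k)$) converges to it.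
   Context: Let $d,m\ge 1$ and let $\Omega\subseteq\mathbb{R}^d$ be a nonempty open set. $\mathcal{M}(\Omega)$ is the space of finite signed Radon measures on $\Omega$ with total variation norm $\|\cdot\|_{\mathcal{M}}$, identified with the dual of $\mathcal{C}_0(\Omega)$ (continuous functions vanishing at infinity, with sup-norm $\|\cdot\|_\infty$). For $\Omega'\subseteq\Omega$, $\mathcal{M}(\Omega')$ denotes the measures in $\mathcal{M}(\Omega)$ supported in $\Omega'$. Fix $a_1,\dots,a_m\in\mathcal{C}_0(\Omega)$; let $A:\mathcal{M}(\Omega)\to\mathbb{R}^m$, $(A\mu)_i=\int_\Omega a_i\,d\mu$, and for $q\in\mathbb{R}^m$ let $A^*q=\sum_{i=1}^m q_i a_i\in\mathcal{C}_0(\Omega)$. Let $f:\mathbb{R}^m\to\mathbb{R}\cup\{+\infty\}$ be proper, convex, lower semicontinuous and bounded from below, with convex conjugate $f^*(q)=\sup_{y}\langle q,y\rangle-f(y)$. Put $J(\mu)=\|\mu\|_{\mathcal{M}}+f(A\mu)$. For $\Omega'\subseteq\Omega$, $(\mathcal{P}(\Omega'))$ is the problem $\inf_{\mu\in\mathcal{M}(\Omega')}J(\mu)$ and $(\mathcal{D}(\Omega'))$ is $\sup\{-f^*(q):q\in\mathbb{R}^m,\ |A^*q(x)|\le 1\ \forall x\in\Omega'\}$; $(\mathcal{P})=(\mathcal{P}(\Omega))$ and $(\mathcal{D})=(\mathcal{D}(\Omega))$. Standing assumption: for $\Omega'=\Omega$ and for each $\Omega'=\Omega_k$ below, both problems admit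 solutions and their optimal values coincide (no duality gap). Exchange algorithm: a set $\Omega_0\subseteq\Omega$ is given; for $k\ge 0$, $\mu_k$ is a solution of $(\mathcal{P}(\Omega_k))$, $q_k$ a solution of $(\mathcal{D}(\Omega_k))$, $X_k$ is the set of all local maximizers $x\in\Omega$ of $|A^*q_k|$ with $|A^*q_k(x)|>1$, and $\Omega_{k+1}=\Omega_k\cup X_k$. *)

(* Defs.v *)
From Stdlib Require Import Reals Lra Classical ClassicalEpsilon FunctionalExtensionality.
From Stdlib Require Vectors.Fin.
Open Scope R_scope.

Definition vec (n : nat) := Fin.t n -> R.

Fixpoint fsum (n : nat) : (Fin.t n -> R) -> R :=
  match n return (Fin.t n -> R) -> R with
  | O => fun _ => 0
  | S k => fun g => g Fin.F1 + fsum k (fun i => g (Fin.FS i))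
  end.

Definition dot {n} (x y : vec n) : R := fsum n (fun i => x i * y i).
Definition vnorm {n} (x : vec n) : R := sqrt (dot x x).
Definition vsub {n} (x y : vec n) : vec n := fun i => x i - y i.
Definition vadd {n} (x y : vec n) : vec n := fun i => x i + y i.
Definition vscale {n} (t : R) (x : vec n) : vec n := fun i => t * x i.
Definition dist {n} (x y : vec n) : R := vnorm (vsub x y).

Definition is_open {d} (U : vec d -> Prop) : Prop :=
  forall x, U x -> exists r, 0 < r /\ forall y, dist x y < r -> U y.
Definition is_closed {d} (K : vec d -> Prop) : Prop := is_open (fun x => ~ K x).
Definition is_bounded {d} (K : vec d -> Prop) : Prop :=
  exists M, forall x, K x -> vnorm x <= M.
Definition is_compact {d} (K : vec d -> Prop) : Prop := is_closed K /\ is_bounded K.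

(** C_0(Om): continuous functions on Om vanishing at infinity (extended by 0
    outside Om, so that elements are uniquely determined). *)
Definition C0 {d} (Om : vec d -> Prop) (phi : vec d -> R) : Prop :=
  (forall x, ~ Om x -> phi x = 0) /\
  (forall x, Om x -> forall eps, 0 < eps -> exists del, 0 < del /\
      forall y, Om y -> dist x y < del -> Rabs (phi y - phi x) < eps) /\
  (forall eps, 0 < eps -> exists K, is_compact K /\ (forall x, K x -> Om x) /\
      forall x, Om x -> ~ K x -> Rabs (phi x) < eps).

(** M(Om) = C_0(Om)^*: bounded linear functionals on C_0(Om); a functional is
    represented as a map on all functions, forced to be 0 off C_0(Om). *)
Definition meas (d : nat) := (vec d -> R) -> R.

Definition IsMeas {d} (Om : vec d -> Prop) (mu : meas d) : Prop :=
  (forall phi, ~ C0 Om phi -> mu phi = 0) /\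
  (forall phi psi c, C0 Om phi -> C0 Om psi ->
      mu (fun x => phi x + c * psi x) = mu phi + c * mu psi) /\
  (exists C, forall phi r, C0 Om phi -> (forall x, Rabs (phi x) <= r) ->
      Rabs (mu phi) <= C * r).

(** |mu|^*(E) = 0 (outer total variation measure of E vanishes, computed via
    the Riesz construction: |mu|(U) = sup { mu phi : phi in C0, |phi|<=1,
    phi = 0 off U } for open U). *)
Definition var_null {d} (Om : vec d -> Prop) (mu : meas d) (E : vec d -> Prop) : Prop :=
  forall eps, 0 < eps -> exists U, is_open U /\ (forall x, E x -> U x) /\
    forall phi, C0 Om phi -> (forall x, Rabs (phi x) <= 1) ->
      (forall x, ~ U x -> phi x = 0) -> mu phi <= eps.

Definition supported_in {d} (Om : vec d -> Prop) (mu : meas d) (Om' : vec d -> Prop) : Prop :=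
  var_null Om mu (fun x => Om x /\ ~ Om' x).

(** Extended reals R ∪ {+oo}: None = +oo. *)
Definition ereal := option R.
Definition ele (a b : ereal) : Prop :=
  match a, b with
  | _, None => True
  | None, Some _ => False
  | Some x, Some y => x <= y
  end.

Definition esup (E : R -> Prop) : ereal :=
  match excluded_middle_informative (bound E /\ exists x, E x) with
  | left H => Some (proj1_sig (completeness E (proj1 H) (proj2 H)))
  | right _ => None
  end.

Definition mnorm {d} (Om : vec d -> Prop) (mu : meas d) : R :=
  match esup (fun r => exists phi, C0 Om phi /\ (forall x, Rabs (phi x) <= 1) /\ r = mu phi) with
  | Some v => v
  | None => 0
  end.

Definition Aop {d m} (a : Fin.t m -> vec d -> R) (mu : meas d) : vec m :=
  fun i => mu (a i).
Definition Astar {d m} (a : Fin.t m -> vec d -> R) (q : vec m) : vec d -> R :=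
  fun x => fsum m (fun i => q i * a i x).

Definition Jfun {d m} (Om : vec d -> Prop) (a : Fin.t m -> vec d -> R)
  (f : vec m -> ereal) (mu : meas d) : ereal :=
  match f (Aop a mu) with
  | None => None
  | Some v => Some (mnorm Om mu + v)
  end.

(** convex conjugate, values in R ∪ {+oo} (f proper so the set is nonempty) *)
Definition fstar {m} (f : vec m -> ereal) (q : vec m) : ereal :=
  esup (fun r => exists y v, f y = Some v /\ r = dot q y - v).

Definition proper {m} (f : vec m -> ereal) : Prop := exists x v, f x = Some v.
Definition convex {m} (f : vec m -> ereal) : Prop :=
  forall x y vx vy t, f x = Some vx -> f y = Some vy -> 0 < t < 1 ->
    exists v, f (vadd (vscale t x) (vscale (1 - t) y)) = Some v /\
              v <= t * vx + (1 - t) * vy.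
Definition lsc {m} (f : vec m -> ereal) : Prop :=
  forall x c, ~ ele (f x) (Some c) ->
    exists del, 0 < del /\ forall y, dist x y < del -> ~ ele (f y) (Some c).
Definition bounded_below {m} (f : vec m -> ereal) : Prop :=
  exists b, forall x v, f x = Some v -> b <= v.

Definition solP {d m} (Om : vec d -> Prop) (a : Fin.t m -> vec d -> R)
  (f : vec m -> ereal) (Om' : vec d -> Prop) (mu : meas d) : Prop :=
  IsMeas Om mu /\ supported_in Om mu Om' /\
  forall nu, IsMeas Om nu -> supported_in Om nu Om' ->
    ele (Jfun Om a f mu) (Jfun Om a f nu).

Definition feasD {d m} (a : Fin.t m -> vec d -> R) (Om' : vec d -> Prop) (q : vec m) : Prop :=
  forall x, Om' x -> Rabs (Astar a q x) <= 1.

(** q maximizes -f^*(q), i.e. minimizes f^*(q), over feasible q *)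
Definition solD {d m} (a : Fin.t m -> vec d -> R) (f : vec m -> ereal)
  (Om' : vec d -> Prop) (q : vec m) : Prop :=
  feasD a Om' q /\ forall q', feasD a Om' q' -> ele (fstar f q) (fstar f q').

(** optimal values coincide: inf (P) = J mu = -f^*(q) = sup (D) *)
Definition no_gap {d m} (Om : vec d -> Prop) (a : Fin.t m -> vec d -> R)
  (f : vec m -> ereal) (mu : meas d) (q : vec m) : Prop :=
  exists v, Jfun Om a f mu = Some v /\ fstar f q = Some (- v).

Definition Xset {d m} (Om : vec d -> Prop) (a : Fin.t m -> vec d -> R) (q : vec m)
  (x : vec d) : Prop :=
  Om x /\ 1 < Rabs (Astar a q x) /\
  exists r, 0 < r /\ forall y, Om y -> dist x y < r ->
    Rabs (Astar a q y) <= Rabs (Astar a q x).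

Definition H1 {m} (f : vec m -> ereal) : Prop :=
  exists (fr : vec m -> R) (g : vec m -> vec m) (L : R),
    0 < L /\ (forall x, f x = Some (fr x)) /\
    (forall x eps, 0 < eps -> exists del, 0 < del /\ forall h, vnorm h < del ->
       Rabs (fr (vadd x h) - fr x - dot (g x) h) <= eps * vnorm h) /\
    (forall x y, vnorm (vsub (g x) (g y)) <= L * vnorm (vsub x y)).

Definition H2 {d m} (Om : vec d -> Prop) (a : Fin.t m -> vec d -> R) (Om0 : vec d -> Prop) : Prop :=
  forall y : vec m, exists mu, IsMeas Om mu /\ supported_in Om mu Om0 /\
    forall i, Aop a mu i = y i.

Definition weakstar_cv {d} (Om : vec d -> Prop) (mus : nat -> meas d) (mu : meas d) : Prop :=
  forall phi, C0 Om phi -> Un_cv (fun k => mus k phi) (mu phi).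
Definition vec_cv {m} (qs : nat -> vec m) (q : vec m) : Prop :=
  forall i, Un_cv (fun k => qs k i) (q i).
Definition ecv (u : nat -> ereal) (l : ereal) : Prop :=
  match l with
  | Some L => forall eps, 0 < eps -> exists N, forall n, (N <= n)%nat ->
                exists v, u n = Some v /\ Rabs (v - L) < eps
  | None => forall M, exists N, forall n, (N <= n)%nat -> ~ ele (u n) (Some M)
  end.
Definition strictly_increasing (phi : nat -> nat) : Prop :=
  forall n, (phi n < phi (S n))%nat.

(* Main.v *)
Require Import Defs.
From Stdlib Require Import Reals.
Open Scope R_scope.
From Stdlib Require Import Reals Lra Lia Classical ClassicalEpsilon FunctionalExtensionality.
From Stdlib Require Import Arith.Cantor ZArith List.
From Stdlib Require Vectors.Fin.
Require Import Defs.
Open Scope R_scope.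

Lemma fsum_ext n (g h : Fin.t n -> R) : (forall i, g i = h i) -> fsum n g = fsum n h.
Proof. revert g h; induction n; intros g h H; simpl; auto. rewrite H, (IHn _ (fun i => h (Fin.FS i))); auto. Qed.

Lemma fsum_plus n (g h : Fin.t n -> R) : fsum n (fun i => g i + h i) = fsum n g + fsum n h.
Proof. revert g h; induction n; intros g h; simpl. lra. rewrite (IHn (fun i => g (Fin.FS i)) (fun i => h (Fin.FS i))). lra. Qed.

Lemma fsum_scal n c (g : Fin.t n -> R) : fsum n (fun i => c * g i) = c * fsum n g.
Proof. revert g; induction n; intros g; simpl. lra. rewrite (IHn (fun i => g (Fin.FS i))). lra. Qed.

Lemma fsum_le n (g h : Fin.t n -> R) : (forall i, g i <= h i) -> fsum n g <= fsum n h.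
Proof. revert g h; induction n; intros g h H; simpl. lra. pose proof (H Fin.F1). pose proof (IHn (fun i => g (Fin.FS i)) (fun i => h (Fin.FS i)) (fun i => H _)). lra. Qed.

Lemma fsum_const n c : fsum n (fun _ => c) = INR n * c.
Proof. induction n; simpl. lra. rewrite IHn. destruct n; simpl; lra. Qed.

Lemma fsum_nonneg n (g : Fin.t n -> R) : (forall i, 0 <= g i) -> 0 <= fsum n g.
Proof. intros H. pose proof (fsum_le n (fun _ => 0) g H). rewrite fsum_const in H0. lra. Qed.

Lemma fsum_abs n (g : Fin.t n -> R) : Rabs (fsum n g) <= fsum n (fun i => Rabs (g i)).
Proof. revert g; induction n; intros g; simpl. rewrite Rabs_R0; lra.
 pose proof (IHn (fun i => g (Fin.FS i))). pose proof (Rabs_triang (g Fin.F1) (fsum n (fun i => g (Fin.FS i)))). lra. Qed.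

Lemma fsum_single n (g : Fin.t n -> R) i : (forall j, 0 <= g j) -> g i <= fsum n g.
Proof. revert g; induction n; intros g H. inversion i.
 simpl. refine (Fin.caseS' i (fun i => g i <= g Fin.F1 + fsum n (fun i => g (Fin.FS i))) _ _); simpl.
 - pose proof (fsum_nonneg n (fun j => g (Fin.FS j)) (fun j => H _)). lra.
 - intros p. pose proof (IHn p (fun j => g (Fin.FS j)) (fun j => H _)). pose proof (H Fin.F1). lra. Qed.

Lemma fsum_zero n : fsum n (fun _ => 0) = 0.
Proof. rewrite fsum_const; lra. Qed.

Lemma fsum_sq_le n (g : Fin.t n -> R) : fsum n (fun i => g i * g i) <= fsum n (fun i => Rabs (g i)) * fsum n (fun i => Rabs (g i)).
Proof. revert g; induction n; intros g; simpl. lra.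
 pose proof (IHn (fun i => g (Fin.FS i))).
 pose proof (fsum_nonneg n (fun i => Rabs (g (Fin.FS i))) (fun i => Rabs_pos _)).
 pose proof (Rabs_pos (g Fin.F1)).
 assert (g Fin.F1 * g Fin.F1 = Rabs (g Fin.F1) * Rabs (g Fin.F1)) by (rewrite <- Rabs_mult; rewrite Rabs_right; [lra| apply Rle_ge, Rle_0_sqr]).
 nra. Qed.

Definition n1 {n} (x : vec n) : R := fsum n (fun i => Rabs (x i)).

Lemma n1_nonneg {n} (x : vec n) : 0 <= n1 x.
Proof. apply fsum_nonneg; intros; apply Rabs_pos. Qed.

Lemma dot_nonneg {n} (x : vec n) : 0 <= dot x x.
Proof. apply fsum_nonneg; intros; apply Rle_0_sqr. Qed.

Lemma coord_le_vnorm {n} (x : vec n) i : Rabs (x i) <= vnorm x.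
Proof. unfold vnorm. rewrite <- sqrt_Rsqr_abs. apply sqrt_le_1_alt. unfold Rsqr, dot.
 apply (fsum_single n (fun i => x i * x i)). intros; apply Rle_0_sqr. Qed.

Lemma vnorm_le_n1 {n} (x : vec n) : vnorm x <= n1 x.
Proof. unfold vnorm. rewrite <- (sqrt_Rsqr (n1 x)) by apply n1_nonneg. apply sqrt_le_1_alt.
 unfold Rsqr, dot, n1. apply fsum_sq_le. Qed.

Lemma n1_le_vnorm {n} (x : vec n) : n1 x <= INR n * vnorm x.
Proof. unfold n1. rewrite <- fsum_const. apply fsum_le. intros; apply coord_le_vnorm. Qed.

Lemma vnorm_nonneg {n} (x : vec n) : 0 <= vnorm x.
Proof. unfold vnorm; apply sqrt_pos. Qed.

Lemma n1_triang {n} (x y : vec n) : n1 (vadd x y) <= n1 x + n1 y.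
Proof. unfold n1, vadd. rewrite <- fsum_plus. apply fsum_le; intros; apply Rabs_triang. Qed.

Lemma n1_sub_sym {n} (x y : vec n) : n1 (vsub x y) = n1 (vsub y x).
Proof. unfold n1, vsub. apply fsum_ext; intros. rewrite Rabs_minus_sym; auto. Qed.

Lemma n1_sub_triang {n} (x y z : vec n) : n1 (vsub x z) <= n1 (vsub x y) + n1 (vsub y z).
Proof. unfold n1, vsub. rewrite <- fsum_plus. apply fsum_le; intros.
 replace (x i - z i) with ((x i - y i) + (y i - z i)) by ring. apply Rabs_triang. Qed.

Lemma dist_sym {n} (x y : vec n) : dist x y = dist y x.
Proof. unfold dist, vnorm, dot, vsub. f_equal. apply fsum_ext; intros; ring. Qed.

Lemma dist_le_n1 {n} (x y : vec n) : dist x y <= n1 (vsub x y).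
Proof. apply vnorm_le_n1. Qed.
Lemma n1_le_dist {n} (x y : vec n) : n1 (vsub x y) <= INR n * dist x y.
Proof. apply n1_le_vnorm. Qed.

Lemma si_ge s : strictly_increasing s -> forall n, (n <= s n)%nat.
Proof. intros H n; induction n. lia. specialize (H n). lia. Qed.

Lemma si_lt s : strictly_increasing s -> forall n m, (n < m)%nat -> (s n < s m)%nat.
Proof. intros H n m Hnm. induction Hnm. apply H. specialize (H m). lia. Qed.

Lemma si_le s : strictly_increasing s -> forall n m, (n <= m)%nat -> (s n <= s m)%nat.
Proof. intros H n m Hnm. destruct (Nat.eq_dec n m). subst; lia. apply Nat.lt_le_incl, si_lt; auto; lia. Qed.

Lemma si_comp s t : strictly_increasing s -> strictly_increasing t -> strictly_increasing (fun n => s (t n)).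
Proof. intros Hs Ht n. apply si_lt; auto. Qed.

Lemma si_id : strictly_increasing (fun n => n).
Proof. intro; lia. Qed.

Lemma cv_sub u l s : Un_cv u l -> strictly_increasing s -> Un_cv (fun n => u (s n)) l.
Proof. intros H Hs eps Heps. destruct (H eps Heps) as [N HN]. exists N. intros n Hn.
 apply HN. pose proof (si_ge s Hs n). lia. Qed.

Lemma cv_tail u w l : Un_cv u l -> (forall n, exists r, (n <= r)%nat /\ w n = u r) -> Un_cv w l.
Proof. intros H Hw eps Heps. destruct (H eps Heps) as [N HN]. exists N. intros n Hn.
 destruct (Hw n) as [r [Hr ->]]. apply HN. lia. Qed.

Lemma extract u l : (forall eps N, 0 < eps -> exists p, (N <= p)%nat /\ Rabs (u p - l) < eps) ->
  exists s, strictly_increasing s /\ Un_cv (fun n => u (s n)) l.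
Proof.
 intros H.
 assert (F : forall (N k : nat), {p | (N <= p)%nat /\ Rabs (u p - l) < / INR (S k)}).
 { intros N k. apply constructive_indefinite_description. apply H. apply Rinv_0_lt_compat, lt_0_INR; lia. }
 set (s := fix s n := match n with O => proj1_sig (F O O) | S k => proj1_sig (F (S (s k)) (S k)) end).
 exists s. split.
 - intro n. change (s (S n)) with (proj1_sig (F (S (s n)) (S n))).
   pose proof (proj2_sig (F (S (s n)) (S n))) as [Hp _]. lia.
 - intros eps Heps.
   assert (Hn : exists N, / eps < INR N).
   { destruct (archimed_cor1 eps Heps) as [N [HN1 HN2]]. exists N.
     apply lt_INR in HN2. simpl in HN2.
     rewrite <- (Rinv_inv (INR N)). apply Rinv_lt_contravar; auto. apply Rmult_lt_0_compat; auto. apply Rinv_0_lt_compat; lra. }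
   destruct Hn as [N HN]. exists N. intros n Hn. unfold Rdist.
   assert (Hs : Rabs (u (s n) - l) < / INR (S n)).
   { destruct n. exact (proj2 (proj2_sig (F O O))).
     change (s (S n)) with (proj1_sig (F (S (s n)) (S n))). exact (proj2 (proj2_sig (F (S (s n)) (S n)))). }
   eapply Rlt_le_trans; [apply Hs|].
   rewrite <- (Rinv_inv eps). apply Rinv_le_contravar. apply Rinv_0_lt_compat; auto.
   apply Rlt_le. eapply Rlt_le_trans; [apply HN|]. apply le_INR; lia.
Qed.


Lemma Rabs_le_b x B : Rabs x <= B -> - B <= x <= B.
Proof. intros H. pose proof (Rle_abs x). pose proof (Rle_abs (- x)). rewrite Rabs_Ropp in H1. lra. Qed.

Lemma BW_R (u : nat -> R) B : (forall n, Rabs (u n) <= B) ->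
  exists s l, strictly_increasing s /\ Un_cv (fun n => u (s n)) l.
Proof.
 intros HB. destruct (Bolzano_Weierstrass u (fun x => - B <= x <= B)) as [l Hl].
 - apply compact_P3.
 - intros n. specialize (HB n). apply Rabs_le_b in HB; auto.
 - destruct (extract u l) as [s Hs].
   + intros eps N Heps. destruct (Hl (fun x => Rabs (x - l) < eps) N) as [p Hp].
     * exists (mkposreal eps Heps). intros y Hy. unfold disc in Hy. simpl in Hy. exact Hy.
     * exists p; auto.
   + exists s, l; auto.
Qed.

Lemma cv_tail2 u w l M : Un_cv u l -> (forall n, (M <= n)%nat -> exists r, (n <= r)%nat /\ w n = u r) -> Un_cv w l.
Proof. intros H Hw eps Heps. destruct (H eps Heps) as [N HN]. exists (max N M). intros n Hn.
 destruct (Hw n) as [r [Hr ->]]. lia. apply HN. lia. Qed.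

Section Diag.
Variable U : nat -> nat -> R.
Variable B : nat -> R.
Hypothesis HB : forall j k, Rabs (U j k) <= B j.

Lemma diag_step (sg : nat -> nat) (j : nat) :
  {t | strictly_increasing t /\ exists l, Un_cv (fun k => U j (sg (t k))) l}.
Proof. apply constructive_indefinite_description.
 destruct (BW_R (fun k => U j (sg k)) (B j)) as [t [l [Ht Hl]]]. intros; apply HB.
 exists t. split; eauto. Qed.

Fixpoint sseq (n : nat) : nat -> nat :=
  match n with O => fun k => k | S n => fun k => sseq n (proj1_sig (diag_step (sseq n) n) k) end.

Lemma sseq_si n : strictly_increasing (sseq n).
Proof. induction n. apply si_id. simpl. apply si_comp; auto. apply (proj1 (proj2_sig (diag_step (sseq n) n))). Qed.

Lemma sseq_sub j n : (j <= n)%nat -> exists r, strictly_increasing r /\ forall k, sseq n k = sseq j (r k).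
Proof. induction 1. exists (fun k => k). split; auto. apply si_id.
 destruct IHle as [r [Hr Hk]]. exists (fun k => r (proj1_sig (diag_step (sseq m) m) k)). split.
 apply si_comp; auto. apply (proj1 (proj2_sig (diag_step (sseq m) m))).
 intros k. simpl. apply Hk. Qed.

Lemma diag : exists s, strictly_increasing s /\ forall j, exists l, Un_cv (fun k => U j (s k)) l.
Proof.
 exists (fun n => sseq (S n) n). split.
 - intros n. change (sseq (S (S n)) (S n)) with (sseq (S n) (proj1_sig (diag_step (sseq (S n)) (S n)) (S n))).
   apply si_lt. apply sseq_si. pose proof (si_ge _ (proj1 (proj2_sig (diag_step (sseq (S n)) (S n)))) (S n)). lia.
 - intros j. destruct (proj2 (proj2_sig (diag_step (sseq j) j))) as [l Hl]. exists l.
   apply (cv_tail2 _ _ _ j Hl). intros n Hn.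
   destruct (sseq_sub (S j) (S n)) as [r [Hr Hk]]. lia.
   exists (r n). split. apply si_ge; auto. rewrite Hk. reflexivity.
Qed.
End Diag.

Definition efin {m} (i0 : Fin.t m) (j : nat) : Fin.t m :=
  match Compare_dec.lt_dec j m with left H => Fin.of_nat_lt H | right _ => i0 end.

Lemma efin_surj {m} (i0 : Fin.t m) (p : Fin.t m) : efin i0 (proj1_sig (Fin.to_nat p)) = p.
Proof. unfold efin. destruct (Compare_dec.lt_dec _ m) as [H|H].
 - rewrite (Fin.of_nat_ext H (proj2_sig (Fin.to_nat p))). apply Fin.of_nat_to_nat_inv.
 - exfalso. apply H. apply (proj2_sig (Fin.to_nat p)). Qed.

Lemma choice_seq (P : nat -> R -> Prop) : (forall j, exists l, P j l) -> exists L : nat -> R, forall j, P j (L j).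
Proof. intros H. exists (fun j => proj1_sig (constructive_indefinite_description _ (H j))).
 intros j. exact (proj2_sig (constructive_indefinite_description _ (H j))). Qed.

Lemma BW_vec {m} (u : nat -> vec m) B : (forall k i, Rabs (u k i) <= B) ->
  exists s q, strictly_increasing s /\ vec_cv (fun k => u (s k)) q.
Proof.
 intros HB. destruct m as [|m].
 - exists (fun k => k), (fun _ => 0). split. apply si_id. intros i. inversion i.
 - destruct (diag (fun j k => u k (efin Fin.F1 j)) (fun _ => B)) as [s [Hs Hl]].
   intros; apply HB.
   destruct (choice_seq _ Hl) as [L HL].
   exists s, (fun i => L (proj1_sig (Fin.to_nat i))). split; auto.
   intros i. pose proof (HL (proj1_sig (Fin.to_nat i))). simpl in H. rewrite efin_surj in H. exact H.
Qed.

Lemma diag_fun {X : Type} (mu : nat -> X -> R) (t : nat -> X) (B : R) :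
  (forall k j, Rabs (mu k (t j)) <= B) -> exists s, strictly_increasing s /\
   forall j, exists l, Un_cv (fun k => mu (s k) (t j)) l.
Proof. intros H. apply (diag (fun j k => mu k (t j)) (fun _ => B)). intros; apply H. Qed.


Lemma choice_nat {A : Type} (P : nat -> A -> Prop) : (forall n, exists a, P n a) -> exists f : nat -> A, forall n, P n (f n).
Proof. intros H. exists (fun n => proj1_sig (constructive_indefinite_description _ (H n))).
 intros n. exact (proj2_sig (constructive_indefinite_description _ (H n))). Qed.

Lemma fin_bound n (P : Fin.t n -> nat -> Prop) :
  (forall i N M, (N <= M)%nat -> P i N -> P i M) -> (forall i, exists N, P i N) -> exists N, forall i, P i N.
Proof. revert P; induction n; intros P Hm H.
 - exists O. intros i; inversion i.
 - destruct (IHn (fun i => P (Fin.FS i))) as [N1 HN1]. intros; eapply Hm; eauto. intros; apply H.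
   destruct (H Fin.F1) as [N0 HN0]. exists (max N0 N1). intros i.
   refine (Fin.caseS' i (fun i => P i (max N0 N1)) _ _).
   + eapply Hm; [|exact HN0]. lia.
   + intros p. eapply Hm; [|apply HN1]. lia. Qed.

Definition dcv {d} (u : nat -> vec d) (x : vec d) : Prop :=
  forall eps, 0 < eps -> exists N, forall k, (N <= k)%nat -> dist x (u k) < eps.

Lemma choice_gen {A B : Type} (P : A -> B -> Prop) : (forall a, exists b, P a b) -> exists f : A -> B, forall a, P a (f a).
Proof. intros H. exists (fun a => proj1_sig (constructive_indefinite_description _ (H a))).
 intros a. exact (proj2_sig (constructive_indefinite_description _ (H a))). Qed.

Lemma inv_small eps : 0 < eps -> exists N, forall k, (N <= k)%nat -> / INR (S k) < eps.
Proof. intros H. destruct (archimed_cor1 eps H) as [N [HN1 HN2]]. exists N. intros k Hk.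
 eapply Rle_lt_trans; [|exact HN1]. apply Rinv_le_contravar. apply lt_0_INR; lia. apply le_INR; lia. Qed.

Lemma vec_cv_dcv {d} (u : nat -> vec d) x : vec_cv u x -> dcv u x.
Proof. intros H eps Heps.
 set (e := eps / (INR d + 1)).
 assert (He : 0 < e). { unfold e. apply Rdiv_lt_0_compat; auto. pose proof (pos_INR d); lra. }
 destruct (fin_bound d (fun i N => forall k, (N <= k)%nat -> Rabs (u k i - x i) < e)) as [N HN].
 - intros i N M HNM HN k Hk. apply HN; lia.
 - intros i. destruct (H i e He) as [N HN]. exists N. exact HN.
 - exists N. intros k Hk. eapply Rle_lt_trans. apply dist_le_n1.
   apply Rle_lt_trans with (INR d * e).
   + unfold n1, vsub. rewrite <- fsum_const. apply fsum_le. intros i. rewrite Rabs_minus_sym. left; apply HN; auto.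
   + unfold e. pose proof (pos_INR d). apply Rmult_lt_reg_r with (INR d + 1). lra.
     replace (INR d * (eps / (INR d + 1)) * (INR d + 1)) with (INR d * eps) by (field; lra). nra. Qed.

Lemma dcv_vec_cv {d} (u : nat -> vec d) x : dcv u x -> vec_cv u x.
Proof. intros H i eps Heps. destruct (H eps Heps) as [N HN]. exists N. intros k Hk.
 unfold Rdist. eapply Rle_lt_trans; [|apply (HN k Hk)]. unfold dist.
 pose proof (coord_le_vnorm (vsub x (u k)) i). unfold vsub in H0. rewrite Rabs_minus_sym. exact H0. Qed.

Lemma dcv_sub {d} (u : nat -> vec d) x s : dcv u x -> strictly_increasing s -> dcv (fun k => u (s k)) x.
Proof. intros H Hs eps Heps. destruct (H eps Heps) as [N HN]. exists N. intros k Hk. apply HN.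
 pose proof (si_ge s Hs k). lia. Qed.

Lemma dist_triang {d} (x y z : vec d) : dist x z <= INR d * (dist x y + dist y z).
Proof. pose proof (dist_le_n1 x z). pose proof (n1_sub_triang x y z).
 pose proof (n1_le_dist x y). pose proof (n1_le_dist y z). rewrite Rmult_plus_distr_l; lra. Qed.

Lemma dcv_close {d} (u w : nat -> vec d) x : dcv u x -> (forall k, dist (u k) (w k) < / INR (S k)) -> dcv w x.
Proof. intros H Hw eps Heps.
 set (e := eps / (2 * (INR d + 1))).
 assert (He : 0 < e). { unfold e. apply Rdiv_lt_0_compat; auto. pose proof (pos_INR d); lra. }
 destruct (H e He) as [N1 HN1]. destruct (inv_small e He) as [N2 HN2].
 exists (max N1 N2). intros k Hk. eapply Rle_lt_trans. apply (dist_triang x (u k) (w k)).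
 pose proof (HN1 k ltac:(lia)). pose proof (HN2 k ltac:(lia)). pose proof (Hw k). pose proof (pos_INR d).
 pose proof (vnorm_nonneg (vsub x (u k))). 
 apply Rle_lt_trans with (INR d * (2 * e)). apply Rmult_le_compat_l; auto. unfold dist in *. lra.
 unfold e. apply Rmult_lt_reg_r with (INR d + 1). lra.
 replace (INR d * (2 * (eps / (2 * (INR d + 1)))) * (INR d + 1)) with (INR d * eps).
 nra. field. lra. Qed.

Lemma compact_seq {d} (K : vec d -> Prop) (u : nat -> vec d) : is_compact K -> (forall k, K (u k)) ->
  exists s x, strictly_increasing s /\ K x /\ dcv (fun k => u (s k)) x.
Proof. intros [Hc [M HM]] Hu.
 destruct (BW_vec u M) as [s [x [Hs Hx]]].
 { intros k i. eapply Rle_trans. apply coord_le_vnorm. apply HM, Hu. }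
 exists s, x. split; auto. apply vec_cv_dcv in Hx. split; auto.
 apply NNPP; intros Hn. destruct (Hc x Hn) as [r [Hr Hb]]. destruct (Hx r Hr) as [N HN].
 apply (Hb (u (s N))). apply HN; lia. apply Hu. Qed.

Lemma C0_seq {d} (Om : vec d -> Prop) phi (u : nat -> vec d) x : C0 Om phi -> Om x -> (forall k, Om (u k)) -> dcv u x ->
  Un_cv (fun k => phi (u k)) (phi x).
Proof. intros [_ [Hc _]] Hx Hu H eps Heps. destruct (Hc x Hx eps Heps) as [del [Hdel Hd]].
 destruct (H del Hdel) as [N HN]. exists N. intros k Hk. apply Hd; auto. Qed.

Lemma C0_bounded {d} (Om : vec d -> Prop) phi : C0 Om phi -> exists M, forall x, Rabs (phi x) <= M.
Proof. intros HC. pose proof HC as [H0 [Hc Hinf]]. destruct (Hinf 1 Rlt_0_1) as [K [HK [HKO HKb]]].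
 assert (exists M, forall x, K x -> Rabs (phi x) <= M).
 { apply NNPP; intros Hn.
   assert (forall n, exists x, K x /\ INR n < Rabs (phi x)).
   { intros n. apply NNPP; intros Hn2. apply Hn. exists (INR n). intros x Kx. apply Rnot_lt_le. intros Hl. apply Hn2; eauto. }
   destruct (choice_nat _ H) as [u Hu].
   destruct (compact_seq K u HK) as [s [x [Hs [Kx Hx]]]]. intros; apply Hu.
   pose proof (C0_seq Om phi (fun k => u (s k)) x HC (HKO x Kx) (fun k => HKO _ (proj1 (Hu _))) Hx) as Hcv.
   destruct (Hcv 1 Rlt_0_1) as [N HN]. destruct (archimed (Rabs (phi x) + 1)) as [Ha _].
   destruct (Rle_dec 0 (IZR (up (Rabs (phi x) + 1)))) as [Hp|Hp]. 2:{ pose proof (Rabs_pos (phi x)). lra. }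
   set (n := max N (Z.to_nat (up (Rabs (phi x) + 1)))).
   specialize (HN n ltac:(unfold n; lia)). pose proof (proj2 (Hu (s n))) as H1'.
   pose proof (si_ge s Hs n) as H1. apply le_INR in H1.
   assert (H2 : INR (Z.to_nat (up (Rabs (phi x) + 1))) <= INR n) by (apply le_INR; unfold n; lia).
   rewrite INR_IZR_INZ in H2. rewrite Znat.Z2Nat.id in H2. 2:{ apply le_IZR; lra. }
   unfold Rdist in HN. pose proof (Rabs_triang_inv (phi (u (s n))) (phi x)).
   pose proof (Rle_abs (phi (u (s n)) - phi x)). pose proof (Rle_abs (Rabs (phi (u (s n))) - Rabs (phi x))). lra. }
 destruct H as [M HM]. exists (Rmax M 1). intros x.
 destruct (classic (K x)). eapply Rle_trans; [apply HM; auto| apply Rmax_l].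
 destruct (classic (Om x)). left. eapply Rlt_le_trans; [apply HKb; auto | apply Rmax_r].
 rewrite H0 by auto. rewrite Rabs_R0. eapply Rle_trans; [|apply Rmax_r]. lra. Qed.

Lemma inv_le_sub s k : strictly_increasing s -> / INR (S (s k)) <= / INR (S k).
Proof. intros Hs. apply Rinv_le_contravar. apply lt_0_INR; lia. apply le_INR. pose proof (si_ge s Hs k); lia. Qed.

Lemma C0_max {d} (Om : vec d -> Prop) psi x0 : C0 Om psi -> Om x0 -> 0 < Rabs (psi x0) ->
  exists x, Om x /\ forall y, Rabs (psi y) <= Rabs (psi x).
Proof. intros HC Hx0 Hpos. pose proof HC as [H0 [Hc Hinf]].
 destruct (Hinf _ Hpos) as [K [HK [HKO HKb]]].
 assert (Kx0 : K x0). { apply NNPP; intros Hn. specialize (HKb x0 Hx0 Hn). lra. }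
 destruct (C0_bounded Om psi HC) as [M HM].
 set (E := fun r => exists y, K y /\ r = Rabs (psi y)).
 assert (HE : bound E). { exists M. intros r [y [_ ->]]. apply HM. }
 assert (HEn : exists r, E r). { exists (Rabs (psi x0)), x0; auto. }
 destruct (completeness E HE HEn) as [Sup [HS1 HS2]].
 assert (Hseq : forall n, exists y, K y /\ Sup - / INR (S n) < Rabs (psi y)).
 { intros n. apply NNPP; intros Hn. assert (Sup <= Sup - / INR (S n)).
   { apply HS2. intros r [y [Ky ->]]. apply Rnot_lt_le. intros Hl. apply Hn; eauto. }
   pose proof (Rinv_0_lt_compat (INR (S n)) (lt_0_INR _ (Nat.lt_0_succ n))). lra. }
 destruct (choice_nat _ Hseq) as [u Hu].
 destruct (compact_seq K u HK) as [s [x [Hs [Kx Hx]]]]. intros; apply Hu.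
 pose proof (C0_seq Om psi (fun k => u (s k)) x HC (HKO x Kx) (fun k => HKO _ (proj1 (Hu _))) Hx) as Hcv.
 exists x. split. apply HKO; auto.
 assert (HKmax : forall y, K y -> Rabs (psi y) <= Rabs (psi x)).
 { intros y Ky. apply Rnot_lt_le. intros Hl. set (g := Rabs (psi y) - Rabs (psi x)).
   assert (Hg : 0 < g / 2) by (unfold g; lra).
   assert (Sy : Rabs (psi y) <= Sup) by (apply HS1; exists y; auto).
   destruct (Hcv _ Hg) as [N1 HN1]. destruct (inv_small _ Hg) as [N2 HN2].
   set (k := max N1 N2). specialize (HN1 k ltac:(unfold k; lia)). specialize (HN2 k ltac:(unfold k; lia)).
   pose proof (inv_le_sub s k Hs). pose proof (proj2 (Hu (s k))).
   unfold Rdist in HN1. pose proof (Rabs_triang_inv (psi (u (s k))) (psi x)). unfold g in *. lra. }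
 intros y. destruct (classic (K y)). auto.
 destruct (classic (Om y)). pose proof (HKb y H1 H). pose proof (HKmax x0 Kx0). lra.
 rewrite H0 by auto. rewrite Rabs_R0. apply Rabs_pos. Qed.

Lemma C0_unif {d} (Om : vec d -> Prop) phi K : C0 Om phi -> is_compact K -> (forall x, K x -> Om x) ->
  forall eps, 0 < eps -> exists del, 0 < del /\ forall x y, K x -> Om y -> dist x y < del -> Rabs (phi y - phi x) < eps.
Proof. intros HC HK HKO eps Heps. apply NNPP; intros Hn.
 assert (Hs : forall n, exists p : vec d * vec d, K (fst p) /\ Om (snd p) /\ dist (fst p) (snd p) < / INR (S n) /\ eps <= Rabs (phi (snd p) - phi (fst p))).
 { intros n. apply NNPP; intros Hn2. apply Hn. exists (/ INR (S n)). split. apply Rinv_0_lt_compat, lt_0_INR; lia.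
   intros x y Kx Oy Hd. apply Rnot_le_lt. intros Hl. apply Hn2. exists (x, y); simpl; auto. }
 destruct (choice_nat _ Hs) as [p Hp].
 destruct (compact_seq K (fun n => fst (p n)) HK) as [s [x [Hss [Kx Hx]]]]. intros; apply Hp.
 assert (Hy : dcv (fun k => snd (p (s k))) x).
 { apply (dcv_close _ _ _ Hx). intros k. eapply Rlt_le_trans. apply Hp. apply inv_le_sub; auto. }
 pose proof (C0_seq Om phi _ x HC (HKO x Kx) (fun k => HKO _ (proj1 (Hp _))) Hx) as H1.
 pose proof (C0_seq Om phi _ x HC (HKO x Kx) (fun k => proj1 (proj2 (Hp _))) Hy) as H2.
 destruct (H1 (eps/2) ltac:(lra)) as [N1 HN1]. destruct (H2 (eps/2) ltac:(lra)) as [N2 HN2].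
 specialize (HN1 (max N1 N2) ltac:(lia)). specialize (HN2 (max N1 N2) ltac:(lia)).
 pose proof (proj2 (proj2 (proj2 (Hp (s (max N1 N2)))))). unfold Rdist in *.
 pose proof (Rabs_triang (phi (snd (p (s (max N1 N2)))) - phi x) (phi x - phi (fst (p (s (max N1 N2)))))).
 rewrite (Rabs_minus_sym (phi x)) in H0.
 replace (phi (snd (p (s (Init.Nat.max N1 N2)))) - phi x + (phi x - phi (fst (p (s (Init.Nat.max N1 N2)))))) with
   (phi (snd (p (s (Init.Nat.max N1 N2)))) - phi (fst (p (s (Init.Nat.max N1 N2))))) in H0 by ring.
 lra. Qed.

Lemma compact_margin {d} (Om : vec d -> Prop) K : is_open Om -> is_compact K -> (forall x, K x -> Om x) ->
  exists rho, 0 < rho /\ forall x y, K x -> dist x y < rho -> Om y.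
Proof. intros HO HK HKO. apply NNPP; intros Hn.
 assert (Hs : forall n, exists p : vec d * vec d, K (fst p) /\ dist (fst p) (snd p) < / INR (S n) /\ ~ Om (snd p)).
 { intros n. apply NNPP; intros Hn2. apply Hn. exists (/ INR (S n)). split. apply Rinv_0_lt_compat, lt_0_INR; lia.
   intros x y Kx Hd. apply NNPP; intros Hy. apply Hn2. exists (x, y); simpl; auto. }
 destruct (choice_nat _ Hs) as [p Hp].
 destruct (compact_seq K (fun n => fst (p n)) HK) as [s [x [Hss [Kx Hx]]]]. intros; apply Hp.
 assert (Hy : dcv (fun k => snd (p (s k))) x).
 { apply (dcv_close _ _ _ Hx). intros k. eapply Rlt_le_trans. apply Hp. apply inv_le_sub; auto. }
 destruct (HO x (HKO x Kx)) as [r [Hr Hb]]. destruct (Hy r Hr) as [N HN].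
 apply (proj2 (proj2 (Hp (s N)))). apply Hb. apply HN; lia. Qed.


Lemma esup_some_ub E v r : esup E = Some v -> E r -> r <= v.
Proof. unfold esup. destruct excluded_middle_informative as [H|H]; intros Heq; inversion Heq.
 destruct (completeness E _ _) as [S [HS1 HS2]]. simpl. intros; apply HS1; auto. Qed.

Lemma esup_some_lub E v b : esup E = Some v -> (forall r, E r -> r <= b) -> v <= b.
Proof. unfold esup. destruct excluded_middle_informative as [H|H]; intros Heq; inversion Heq.
 destruct (completeness E _ _) as [S [HS1 HS2]]. simpl. intros; apply HS2; auto. Qed.

Lemma esup_bound E b : (exists r, E r) -> (forall r, E r -> r <= b) -> exists v, esup E = Some v /\ v <= b.
Proof. intros Hn Hb. unfold esup. destruct excluded_middle_informative as [H|H].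
 - destruct (completeness E _ _) as [S [HS1 HS2]]. simpl. exists S; split; [reflexivity|]. apply HS2. intros r Hr; apply Hb; auto.
 - exfalso; apply H. split; auto. exists b. intros r Hr; apply Hb; auto. Qed.

Lemma esup_none E : esup E = None -> (exists r, E r) -> forall b, exists r, E r /\ b < r.
Proof. intros H Hn b. apply NNPP; intros Hc. destruct (esup_bound E b Hn) as [v [Hv _]].
 intros r Hr. apply Rnot_lt_le. intros Hl. apply Hc; eauto. congruence. Qed.

Lemma esup_approx E v eps : esup E = Some v -> 0 < eps -> exists r, E r /\ v - eps < r.
Proof. intros H He. apply NNPP; intros Hc.
 assert (v <= v - eps). { apply (esup_some_lub E); auto. intros r Hr. apply Rnot_lt_le. intros Hl; apply Hc; eauto. }
 lra. Qed.

Lemma compact_union {d} (K1 K2 : vec d -> Prop) : is_compact K1 -> is_compact K2 -> is_compact (fun x => K1 x \/ K2 x).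
Proof. intros [C1 [M1 B1]] [C2 [M2 B2]]. split.
 - intros x Hx. assert (~ K1 x /\ ~ K2 x) as [H1 H2] by tauto.
   destruct (C1 x H1) as [r1 [Hr1 Hb1]]. destruct (C2 x H2) as [r2 [Hr2 Hb2]].
   exists (Rmin r1 r2). split. apply Rmin_pos; auto.
   intros y Hy [Hk|Hk]. apply (Hb1 y); auto. eapply Rlt_le_trans; [apply Hy|apply Rmin_l].
   apply (Hb2 y); auto. eapply Rlt_le_trans; [apply Hy|apply Rmin_r].
 - exists (Rmax M1 M2). intros x [Hk|Hk]. eapply Rle_trans; [apply B1; auto| apply Rmax_l].
   eapply Rle_trans; [apply B2; auto| apply Rmax_r]. Qed.

Lemma C0_comp2 {d} (Om : vec d -> Prop) (h : R -> R -> R) L phi psi : 0 < L -> h 0 0 = 0 ->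
  (forall a b a' b', Rabs (h a b - h a' b') <= L * (Rabs (a - a') + Rabs (b - b'))) ->
  C0 Om phi -> C0 Om psi -> C0 Om (fun x => h (phi x) (psi x)).
Proof. intros HL H0 Hlip [Z1 [C1 V1]] [Z2 [C2 V2]].
 assert (Habs : forall a b, Rabs (h a b) <= L * (Rabs a + Rabs b)).
 { intros a b. specialize (Hlip a b 0 0). rewrite H0, !Rminus_0_r in Hlip. exact Hlip. }
 split; [|split].
 - intros x Hx. rewrite Z1, Z2; auto.
 - intros x Hx eps Heps. assert (He : 0 < eps / (2 * L)) by (apply Rdiv_lt_0_compat; lra).
   destruct (C1 x Hx _ He) as [d1 [Hd1 Hb1]]. destruct (C2 x Hx _ He) as [d2 [Hd2 Hb2]].
   exists (Rmin d1 d2). split. apply Rmin_pos; auto. intros y Hy Hd.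
   eapply Rle_lt_trans. apply Hlip.
   assert (Rabs (phi y - phi x) < eps / (2*L)) by (apply Hb1; auto; eapply Rlt_le_trans; [apply Hd|apply Rmin_l]).
   assert (Rabs (psi y - psi x) < eps / (2*L)) by (apply Hb2; auto; eapply Rlt_le_trans; [apply Hd|apply Rmin_r]).
   replace eps with (L * (eps / (2 * L) + eps / (2 * L))) by (field; lra).
   apply Rmult_lt_compat_l; lra.
 - intros eps Heps. assert (He : 0 < eps / (2 * L)) by (apply Rdiv_lt_0_compat; lra).
   destruct (V1 _ He) as [K1 [HK1 [HO1 Hb1]]]. destruct (V2 _ He) as [K2 [HK2 [HO2 Hb2]]].
   exists (fun x => K1 x \/ K2 x). split. apply compact_union; auto. split. intros x [|]; auto.
   intros x Hx Hn. eapply Rle_lt_trans. apply Habs.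
   assert (Rabs (phi x) < eps / (2*L)) by (apply Hb1; tauto).
   assert (Rabs (psi x) < eps / (2*L)) by (apply Hb2; tauto).
   replace eps with (L * (eps / (2 * L) + eps / (2 * L))) by (field; lra).
   apply Rmult_lt_compat_l; lra. Qed.

Lemma C0_ext {d} (Om : vec d -> Prop) phi psi : C0 Om phi -> (forall x, phi x = psi x) -> C0 Om psi.
Proof. intros H E. replace psi with phi; auto. apply functional_extensionality; auto. Qed.

Lemma C0_zero {d} (Om : vec d -> Prop) : C0 Om (fun _ => 0).
Proof. split; [|split]; auto.
 - intros x _ eps He. exists 1. split. lra. intros. rewrite Rminus_0_r, Rabs_R0. auto.
 - intros eps He. exists (fun _ => False). split; [split|split].
   + intros x _. exists 1. split. lra. auto.
   + exists 0. intros x [].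
   + intros x [].
   + intros. rewrite Rabs_R0; auto. Qed.

Lemma C0_lin {d} (Om : vec d -> Prop) phi psi c : C0 Om phi -> C0 Om psi -> C0 Om (fun x => phi x + c * psi x).
Proof. intros H1 H2. apply (C0_comp2 Om (fun a b => a + c * b) (1 + Rabs c)); auto.
 pose proof (Rabs_pos c); lra. ring.
 intros a b a' b'. replace (a + c * b - (a' + c * b')) with ((a - a') + c * (b - b')) by ring.
 eapply Rle_trans. apply Rabs_triang. rewrite Rabs_mult. pose proof (Rabs_pos c). pose proof (Rabs_pos (a - a')). pose proof (Rabs_pos (b-b')). nra. Qed.

Lemma C0_scal {d} (Om : vec d -> Prop) psi c : C0 Om psi -> C0 Om (fun x => c * psi x).
Proof. intros H. apply (C0_ext Om (fun x => 0 + c * psi x)). apply C0_lin; auto. apply C0_zero. intros; ring. Qed.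

Lemma C0_sub {d} (Om : vec d -> Prop) phi psi : C0 Om phi -> C0 Om psi -> C0 Om (fun x => phi x - psi x).
Proof. intros H1 H2. apply (C0_ext Om (fun x => phi x + (-1) * psi x)). apply C0_lin; auto. intros; ring. Qed.

Lemma Rmax_lip a b a' b' : Rabs (Rmax a b - Rmax a' b') <= Rabs (a - a') + Rabs (b - b').
Proof. unfold Rmax. pose proof (Rabs_pos (a-a')). pose proof (Rabs_pos (b-b')).
 pose proof (Rle_abs (a-a')). pose proof (Rle_abs (b-b')). pose proof (Rle_abs (-(a-a'))). pose proof (Rle_abs (-(b-b'))).
 rewrite Rabs_Ropp in *.
 destruct (Rle_dec a b); destruct (Rle_dec a' b'); apply Rabs_le; lra. Qed.

Lemma C0_max2 {d} (Om : vec d -> Prop) phi psi : C0 Om phi -> C0 Om psi -> C0 Om (fun x => Rmax (phi x) (psi x)).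
Proof. intros H1 H2. apply (C0_comp2 Om Rmax 1); auto. lra. unfold Rmax; destruct Rle_dec; auto.
 intros. rewrite Rmult_1_l. apply Rmax_lip. Qed.

Lemma C0_comp1 {d} (Om : vec d -> Prop) (g : R -> R) phi : g 0 = 0 -> (forall a b, Rabs (g a - g b) <= Rabs (a - b)) ->
  C0 Om phi -> C0 Om (fun x => g (phi x)).
Proof. intros H0 Hl H. apply (C0_comp2 Om (fun a _ => g a) 1 phi phi); auto. lra.
 intros. pose proof (Hl a a'). pose proof (Rabs_pos (b - b')). lra. Qed.

Lemma C0_Astar {d m} (Om : vec d -> Prop) (a : Fin.t m -> vec d -> R) q : (forall i, C0 Om (a i)) -> C0 Om (Astar a q).
Proof. intros Ha. unfold Astar. revert a Ha q. induction m; intros a Ha q; simpl.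
 apply C0_zero.
 apply (C0_ext Om (fun x => a Fin.F1 x * q Fin.F1 + 1 * fsum m (fun i => q (Fin.FS i) * a (Fin.FS i) x))).
 apply C0_lin. apply (C0_ext Om (fun x => q Fin.F1 * a Fin.F1 x)). apply C0_scal; auto. intros; ring.
 apply (IHm (fun i => a (Fin.FS i))). intros; apply Ha. intros; ring. Qed.


Section Meas.
Context {d : nat} (Om : vec d -> Prop) (mu : meas d) (Hmu : IsMeas Om mu).

Lemma meas_lin phi psi c : C0 Om phi -> C0 Om psi -> mu (fun x => phi x + c * psi x) = mu phi + c * mu psi.
Proof. apply (proj1 (proj2 Hmu)). Qed.

Lemma meas_zero : mu (fun _ => 0) = 0.
Proof. pose proof (meas_lin (fun _ => 0) (fun _ => 0) 1 (C0_zero Om) (C0_zero Om)). cbv beta in H.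
 replace (fun _ : vec d => 0 + 1 * 0) with (fun _ : vec d => 0) in H by (apply functional_extensionality; intros; ring). lra. Qed.

Lemma meas_scal psi c : C0 Om psi -> mu (fun x => c * psi x) = c * mu psi.
Proof. intros H. pose proof (meas_lin (fun _ => 0) psi c (C0_zero Om) H). rewrite meas_zero in H0. cbv beta in H0.
 replace (fun x => 0 + c * psi x) with (fun x => c * psi x) in H0 by (apply functional_extensionality; intros; ring). lra. Qed.

Lemma meas_sub phi psi : C0 Om phi -> C0 Om psi -> mu (fun x => phi x - psi x) = mu phi - mu psi.
Proof. intros H1 H2. pose proof (meas_lin phi psi (-1) H1 H2).
 replace (fun x => phi x + -1 * psi x) with (fun x => phi x - psi x) in H by (apply functional_extensionality; intros; ring). lra. Qed.

Lemma meas_add phi psi : C0 Om phi -> C0 Om psi -> mu (fun x => phi x + psi x) = mu phi + mu psi.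
Proof. intros H1 H2. pose proof (meas_lin phi psi 1 H1 H2).
 replace (fun x => phi x + 1 * psi x) with (fun x => phi x + psi x) in H by (apply functional_extensionality; intros; ring). lra. Qed.

Definition Eset := fun r => exists phi, C0 Om phi /\ (forall x, Rabs (phi x) <= 1) /\ r = mu phi.

Lemma mnorm_some : esup Eset = Some (mnorm Om mu).
Proof. destruct Hmu as [_ [_ [C HC]]].
 destruct (esup_bound Eset C) as [v [Hv _]].
 - exists (mu (fun _ => 0)), (fun _ => 0). split. apply C0_zero. split; auto. intros; rewrite Rabs_R0; lra.
 - intros r [phi [H1 [H2 ->]]]. specialize (HC phi 1 H1 H2). pose proof (Rle_abs (mu phi)). lra.
 - unfold mnorm. fold Eset. rewrite Hv. auto. Qed.

Lemma mnorm_ub phi : C0 Om phi -> (forall x, Rabs (phi x) <= 1) -> mu phi <= mnorm Om mu.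
Proof. intros H1 H2. apply (esup_some_ub Eset). apply mnorm_some. exists phi; auto. Qed.

Lemma mnorm_lub B : (forall phi, C0 Om phi -> (forall x, Rabs (phi x) <= 1) -> mu phi <= B) -> mnorm Om mu <= B.
Proof. intros H. apply (esup_some_lub Eset _ _ mnorm_some). intros r [phi [H1 [H2 ->]]]. auto. Qed.

Lemma mnorm_nonneg : 0 <= mnorm Om mu.
Proof. rewrite <- meas_zero. apply mnorm_ub. apply C0_zero. intros; rewrite Rabs_R0; lra. Qed.

Lemma meas_bound phi r : C0 Om phi -> (forall x, Rabs (phi x) <= r) -> Rabs (mu phi) <= mnorm Om mu * r.
Proof. intros H1 H2. destruct (Rle_lt_dec r 0).
 - assert (phi = fun _ => 0). { apply functional_extensionality. intros x. specialize (H2 x). pose proof (Rabs_pos (phi x)).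
     assert (Rabs (phi x) = 0) by lra. destruct (Req_dec (phi x) 0); auto. exfalso; apply Rabs_no_R0 in H3; auto. }
   subst. rewrite meas_zero, Rabs_R0. pose proof mnorm_nonneg. pose proof (H2 (fun _ => 0)). rewrite Rabs_R0 in H0. 
   replace r with 0 by lra. lra.
 - assert (Hs : forall c, C0 Om (fun x => c * phi x)) by (intros; apply C0_scal; auto).
   assert (Hb : forall x, Rabs (/ r * phi x) <= 1).
   { intros x. rewrite Rabs_mult, Rabs_inv, (Rabs_right r) by lra.
     apply Rmult_le_reg_l with r; auto. rewrite <- Rmult_assoc, Rinv_r by lra. rewrite Rmult_1_r, Rmult_1_l. auto. }
   assert (Hb' : forall x, Rabs (- / r * phi x) <= 1).
   { intros x. rewrite Ropp_mult_distr_l_reverse, Rabs_Ropp. auto. }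
   pose proof (mnorm_ub _ (Hs (/ r)) Hb). pose proof (mnorm_ub _ (Hs (- / r)) Hb').
   rewrite meas_scal in H, H0 by auto.
   apply Rabs_le. split.
   + apply Rmult_le_reg_l with (/ r). apply Rinv_0_lt_compat; auto.
     replace (/ r * (- (mnorm Om mu * r))) with (- mnorm Om mu) by (field; lra). lra.
   + apply Rmult_le_reg_l with (/ r). apply Rinv_0_lt_compat; auto.
     replace (/ r * (mnorm Om mu * r)) with (mnorm Om mu) by (field; lra). lra. Qed.

End Meas.

Lemma supported_mono {d} (Om : vec d -> Prop) mu O1 O2 : (forall x, O1 x -> O2 x) -> supported_in Om mu O1 -> supported_in Om mu O2.
Proof. intros H Hs eps He. destruct (Hs eps He) as [U [HU [HE Hb]]]. exists U. split; auto. split; auto.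
 intros x [Hx Hn]. apply HE. split; auto. Qed.

Lemma supported_full {d} (Om : vec d -> Prop) mu : IsMeas Om mu -> supported_in Om mu Om.
Proof. intros Hm eps He. exists (fun _ => False). split. intros x []. split. intros x [Hx Hn]; auto.
 intros phi H1 H2 H3. replace phi with (fun _ : vec d => 0). rewrite (meas_zero Om mu Hm). lra.
 apply functional_extensionality. intros x. symmetry; apply H3; auto. Qed.


Definition decR (n : nat) : R :=
  let (a, r) := Cantor.of_nat n in let (b, c) := Cantor.of_nat r in (INR a - INR b) / INR (S c).

Lemma decR_code a b c : decR (Cantor.to_nat (a, Cantor.to_nat (b, c))) = (INR a - INR b) / INR (S c).
Proof. unfold decR. rewrite !Cantor.cancel_of_to. reflexivity. Qed.

Lemma IZR_nat_diff (z : Z) : exists a b, IZR z = INR a - INR b.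
Proof. destruct (Z_le_dec 0 z).
 - exists (Z.to_nat z), O. rewrite (INR_IZR_INZ (Z.to_nat z)), Znat.Z2Nat.id by lia. simpl; ring.
 - exists O, (Z.to_nat (- z)). rewrite (INR_IZR_INZ (Z.to_nat (- z))), Znat.Z2Nat.id by lia. rewrite opp_IZR. simpl; ring. Qed.

Lemma decR_dense r eps : 0 < eps -> exists n, Rabs (decR n - r) < eps.
Proof. intros He. destruct (inv_small eps He) as [N HN]. specialize (HN N (le_n _)).
 set (D := INR (S N)). assert (HD : 0 < D) by (apply lt_0_INR; lia).
 destruct (archimed (r * D)) as [H1 H2].
 destruct (IZR_nat_diff (up (r * D) - 1)) as [a [b Hab]].
 exists (Cantor.to_nat (a, Cantor.to_nat (b, N))). rewrite decR_code. fold D. rewrite <- Hab.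
 rewrite minus_IZR in *. 
 assert (Hx : Rabs ((IZR (up (r * D)) - 1) / D - r) <= / D).
 { replace ((IZR (up (r * D)) - 1) / D - r) with ((IZR (up (r * D)) - 1 - r * D) / D) by (field; lra).
   unfold Rdiv. rewrite Rabs_mult, Rabs_inv, (Rabs_right D) by lra.
   replace (/ D) with (1 * / D) at 2 by ring. apply Rmult_le_compat_r. left; apply Rinv_0_lt_compat; auto.
   apply Rabs_le; lra. }
 fold D in HN. lra. Qed.

Fixpoint decV (d : nat) (n : nat) : vec d :=
  match d with
  | O => fun _ => 0
  | S d' => fun i => Fin.caseS' i (fun _ => R) (decR (fst (Cantor.of_nat n))) (fun j => decV d' (snd (Cantor.of_nat n)) j)
  end.

Lemma decV_F1 d n : decV (S d) n Fin.F1 = decR (fst (Cantor.of_nat n)).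
Proof. reflexivity. Qed.
Lemma decV_FS d n j : decV (S d) n (Fin.FS j) = decV d (snd (Cantor.of_nat n)) j.
Proof. reflexivity. Qed.

Lemma decV_dense d (p : vec d) eps : 0 < eps -> exists n, forall i, Rabs (decV d n i - p i) < eps.
Proof. revert p; induction d; intros p He.
 - exists O. intros i; inversion i.
 - destruct (IHd (fun j => p (Fin.FS j)) He) as [n2 Hn2]. destruct (decR_dense (p Fin.F1) eps He) as [n1 Hn1].
   exists (Cantor.to_nat (n1, n2)). intros i. refine (Fin.caseS' i (fun i => Rabs (decV (S d) _ i - p i) < eps) _ _).
   + rewrite decV_F1, Cantor.cancel_of_to. simpl. auto.
   + intros j. rewrite decV_FS, Cantor.cancel_of_to. simpl. apply Hn2. Qed.

Lemma decV_dense_n1 d (p : vec d) eps : 0 < eps -> exists n, n1 (vsub (decV d n) p) < eps.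
Proof. intros He. set (e := eps / (INR d + 1)).
 assert (Hep : 0 < e) by (unfold e; apply Rdiv_lt_0_compat; auto; pose proof (pos_INR d); lra).
 destruct (decV_dense d p e Hep) as [n Hn]. exists n.
 apply Rle_lt_trans with (INR d * e). unfold n1, vsub. rewrite <- fsum_const. apply fsum_le. intros; left; apply Hn.
 unfold e. pose proof (pos_INR d). apply Rmult_lt_reg_r with (INR d + 1). lra.
 replace (INR d * (eps / (INR d + 1)) * (INR d + 1)) with (INR d * eps) by (field; lra). nra. Qed.

Fixpoint decL (len code : nat) : list nat :=
  match len with O => nil | S l => cons (fst (Cantor.of_nat code)) (decL l (snd (Cantor.of_nat code))) end.

Lemma decL_surj (L : list nat) : exists len code, decL len code = L.
Proof. induction L as [|a L [len [code IH]]]. exists O, O; auto.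
 exists (S len), (Cantor.to_nat (a, code)). change (decL (S len) (Cantor.to_nat (a, code))) with
  (cons (fst (Cantor.of_nat (Cantor.to_nat (a, code)))) (decL len (snd (Cantor.of_nat (Cantor.to_nat (a, code)))))).
 rewrite Cantor.cancel_of_to. simpl. rewrite IH. auto. Qed.

Definition decList (k : nat) : list nat := let (len, code) := Cantor.of_nat k in decL len code.

Lemma decList_surj (L : list nat) : exists k, decList k = L.
Proof. destruct (decL_surj L) as [len [code H]]. exists (Cantor.to_nat (len, code)). unfold decList.
 rewrite Cantor.cancel_of_to. auto. Qed.

Definition fac (del t : R) : R := Rmin 1 (Rmax 0 (2 - 2 * t / del)).

Lemma fac_01 del t : 0 <= fac del t <= 1.
Proof. unfold fac, Rmin, Rmax. repeat destruct Rle_dec; lra. Qed.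

Lemma fac_one del t : 0 < del -> t <= del / 2 -> fac del t = 1.
Proof. intros H1 H2. unfold fac. assert (1 <= 2 - 2 * t / del).
 { apply Rmult_le_reg_r with del; auto. replace ((2 - 2 * t / del) * del) with (2 * del - 2 * t) by (field; lra). lra. }
 unfold Rmin, Rmax. repeat destruct Rle_dec; lra. Qed.

Lemma fac_zero del t : 0 < del -> del <= t -> fac del t = 0.
Proof. intros H1 H2. unfold fac. assert (2 - 2 * t / del <= 0).
 { apply Rmult_le_reg_r with del; auto. replace ((2 - 2 * t / del) * del) with (2 * del - 2 * t) by (field; lra). lra. }
 unfold Rmin, Rmax. repeat destruct Rle_dec; lra. Qed.

Lemma fac_lip del t1 t2 : 0 < del -> Rabs (fac del t1 - fac del t2) <= 2 / del * Rabs (t1 - t2).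
Proof. intros H. unfold fac.
 assert (Hm : forall a b, Rabs (Rmin 1 (Rmax 0 a) - Rmin 1 (Rmax 0 b)) <= Rabs (a - b)).
 { intros a b. unfold Rmin, Rmax. pose proof (Rle_abs (a-b)). pose proof (Rle_abs (-(a-b))). rewrite Rabs_Ropp in H1.
   repeat destruct Rle_dec; apply Rabs_le; lra. }
 eapply Rle_trans. apply Hm. replace (2 - 2 * t1 / del - (2 - 2 * t2 / del)) with (2 / del * (t2 - t1)) by (field; lra).
 rewrite Rabs_mult, (Rabs_right (2 / del)), Rabs_minus_sym. lra. left; apply Rdiv_lt_0_compat; lra. Qed.

Lemma n1_diff {d} (x y c : vec d) : Rabs (n1 (vsub x c) - n1 (vsub y c)) <= n1 (vsub x y).
Proof. pose proof (n1_sub_triang x y c). pose proof (n1_sub_triang y x c). rewrite (n1_sub_sym y x) in H0.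
 apply Rabs_le; lra. Qed.

Section Cones.
Context {d : nat} (Om : vec d -> Prop).

Definition cone (c : vec d) (del h : R) (x : vec d) : R := h * fac del (n1 (vsub x c)).
Definition valid (c : vec d) (del : R) : Prop := 0 < del /\ forall y, n1 (vsub y c) <= del -> Om y.
Definition tcone c del h : vec d -> R :=
  if excluded_middle_informative (valid c del) then cone c del h else fun _ => 0.

Lemma ball_compact (c : vec d) del : is_compact (fun y => n1 (vsub y c) <= del).
Proof. split.
 - intros x Hx. apply Rnot_le_lt in Hx. exists ((n1 (vsub x c) - del) / (INR d + 1)). split.
   apply Rdiv_lt_0_compat. lra. pose proof (pos_INR d); lra.
   intros y Hy Hn. pose proof (n1_diff x y c). pose proof (n1_le_dist x y). pose proof (pos_INR d).
   pose proof (vnorm_nonneg (vsub x y)). unfold dist in *.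
   set (g := n1 (vsub x c) - del) in *. set (e := g / (INR d + 1)) in *.
   assert (INR d * e < g). { unfold e. apply Rmult_lt_reg_r with (INR d + 1). lra.
     replace (INR d * (g / (INR d + 1)) * (INR d + 1)) with (INR d * g) by (field; lra). unfold g; nra. }
   assert (INR d * vnorm (vsub x y) <= INR d * e) by (apply Rmult_le_compat_l; lra).
   pose proof (Rle_abs (n1 (vsub x c) - n1 (vsub y c))). assert (Hg : g = n1 (vsub x c) - del) by reflexivity. lra.
 - exists (del + n1 c). intros y Hy. eapply Rle_trans. apply vnorm_le_n1.
   pose proof (n1_triang (vsub y c) c). replace (vadd (vsub y c) c) with y in H.
   lra. apply functional_extensionality; intros i; unfold vadd, vsub; ring. Qed.

Lemma cone_C0 c del h : valid c del -> C0 Om (cone c del h).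
Proof. intros [Hd Hv]. split; [|split].
 - intros x Hx. unfold cone. rewrite fac_zero; auto. ring. apply Rnot_lt_le. intros Hl. apply Hx, Hv. lra.
 - intros x Hx eps He. exists (eps / ((Rabs h + 1) * (2 / del) * (INR d + 1))). split.
   apply Rdiv_lt_0_compat; auto. pose proof (Rabs_pos h). pose proof (pos_INR d).
   apply Rmult_lt_0_compat. apply Rmult_lt_0_compat. lra. apply Rdiv_lt_0_compat; lra. lra.
   intros y Hy Hxy. unfold cone. rewrite <- Rmult_minus_distr_l, Rabs_mult.
   pose proof (fac_lip del (n1 (vsub y c)) (n1 (vsub x c)) Hd). pose proof (n1_diff y x c).
   pose proof (n1_le_dist y x). rewrite dist_sym in H1. pose proof (Rabs_pos h). pose proof (pos_INR d).
   set (D := (Rabs h + 1) * (2 / del) * (INR d + 1)).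
   assert (HD : 0 < D). { unfold D. apply Rmult_lt_0_compat. apply Rmult_lt_0_compat. lra. apply Rdiv_lt_0_compat; lra. lra. }
   assert (Hf : Rabs (fac del (n1 (vsub y c)) - fac del (n1 (vsub x c))) <= 2 / del * (INR d * dist x y)).
   { eapply Rle_trans. apply H. apply Rmult_le_compat_l. left; apply Rdiv_lt_0_compat; lra. lra. }
   assert (2 / del * (INR d * dist x y) <= 2 / del * (INR d + 1) * dist x y).
   { pose proof (vnorm_nonneg (vsub x y)). unfold dist in *. assert (0 < 2 / del) by (apply Rdiv_lt_0_compat; lra). nra. }
   apply Rle_lt_trans with ((Rabs h + 1) * (2 / del * (INR d + 1) * dist x y)).
   { pose proof (Rabs_pos (fac del (n1 (vsub y c)) - fac del (n1 (vsub x c)))). apply Rmult_le_compat; lra. }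
   replace ((Rabs h + 1) * (2 / del * (INR d + 1) * dist x y)) with (D * dist x y) by (unfold D; ring).
   apply Rmult_lt_reg_l with (/ D). apply Rinv_0_lt_compat; auto.
   rewrite <- Rmult_assoc, Rinv_l, Rmult_1_l by lra. rewrite Rmult_comm. exact Hxy.
 - intros eps He. exists (fun y => n1 (vsub y c) <= del). split. apply ball_compact. split. auto.
   intros x _ Hn. unfold cone. rewrite fac_zero; auto. rewrite Rmult_0_r, Rabs_R0; auto. lra. Qed.

Lemma tcone_C0 c del h : C0 Om (tcone c del h).
Proof. unfold tcone. destruct excluded_middle_informative. apply cone_C0; auto. apply C0_zero. Qed.

Lemma tcone_val c del h : valid c del -> tcone c del h = cone c del h.
Proof. intros H. unfold tcone. destruct excluded_middle_informative; tauto. Qed.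

Definition data (n : nat) : vec d * R * R :=
  let (a, r) := Cantor.of_nat n in let (N, b) := Cantor.of_nat r in (decV d a, / INR (S N), decR b).

Lemma data_code a N b : data (Cantor.to_nat (a, Cantor.to_nat (N, b))) = (decV d a, / INR (S N), decR b).
Proof. unfold data. rewrite !Cantor.cancel_of_to. reflexivity. Qed.

Definition tc (n : nat) : vec d -> R := tcone (fst (fst (data n))) (snd (fst (data n))) (snd (data n)).

Fixpoint maxc (L : list nat) (x : vec d) : R :=
  match L with nil => 0 | cons n L' => Rmax (tc n x) (maxc L' x) end.

Definition T (j : nat) (x : vec d) : R :=
  let (j1, j2) := Cantor.of_nat j in maxc (decList j1) x - maxc (decList j2) x.

Lemma maxc_C0 L : C0 Om (maxc L).
Proof. induction L; simpl. apply C0_zero. apply C0_max2; auto. apply tcone_C0. Qed.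

Lemma T_C0 j : C0 Om (T j).
Proof. unfold T. destruct (Cantor.of_nat j). apply C0_sub; apply maxc_C0. Qed.

Lemma maxc_ge0 L x : 0 <= maxc L x.
Proof. induction L; simpl. lra. eapply Rle_trans; [|apply Rmax_r]. auto. Qed.

End Cones.

Lemma Rabs_lt_between' a b e : Rabs (a - b) < e -> b - e < a < b + e.
Proof. intros H. pose proof (Rle_abs (a - b)). pose proof (Rle_abs (-(a-b))). rewrite Rabs_Ropp in H1. lra. Qed.

Section Approx.
Context {d : nat} (Om : vec d -> Prop) (HO : is_open Om).

Lemma n1_lt_dist (x y : vec d) r : n1 (vsub x y) < r -> dist x y < r.
Proof. intros H. eapply Rle_lt_trans. apply dist_le_n1. auto. Qed.

Lemma net (K : vec d -> Prop) r : is_compact K -> 0 < r ->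
  exists P : list (vec d), (forall p, In p P -> K p) /\ forall x, K x -> exists p, In p P /\ n1 (vsub x p) < r.
Proof. intros HK Hr. apply NNPP; intros Hn.
 assert (HF : forall P : list (vec d), exists x, (forall p, In p P -> K p) -> K x /\ forall p, In p P -> r <= n1 (vsub x p)).
 { intros P. destruct (classic (forall p, In p P -> K p)) as [HP|HP].
   - apply NNPP; intros Hc. apply Hn. exists P. split; auto. intros x Kx. apply NNPP; intros Hc2. apply Hc. exists x. intros _. split; auto.
     intros p Hp. apply Rnot_lt_le. intros Hl. apply Hc2. eauto.
   - exists (fun _ => 0). intros H; contradiction. }
 destruct (choice_gen _ HF) as [F HFs].
 set (hist := fix hist n := match n with O => nil | S n => cons (F (hist n)) (hist n) end).
 assert (HK1 : forall n p, In p (hist n) -> K p).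
 { induction n; simpl. intros p []. intros p [<-|Hp]; auto. apply (HFs (hist n)); auto. }
 set (u := fun n => F (hist n)).
 assert (Ku : forall n, K (u n)). { intros n. apply (HFs (hist n)). apply HK1. }
 assert (Hin : forall m n, (m < n)%nat -> In (u m) (hist n)).
 { intros m n Hmn. induction Hmn. simpl. left; auto. simpl. right; auto. }
 assert (Hsep : forall m n, (m < n)%nat -> r <= n1 (vsub (u n) (u m))).
 { intros m n Hmn. apply (HFs (hist n)). apply HK1. apply Hin; auto. }
 destruct (compact_seq K u HK Ku) as [s [x [Hs [Kx Hx]]]].
 set (e := r / (2 * (INR d + 1))). assert (He : 0 < e) by (unfold e; apply Rdiv_lt_0_compat; auto; pose proof (pos_INR d); lra).
 destruct (Hx e He) as [N HN].
 pose proof (HN N (le_n _)). pose proof (HN (S N) (le_S _ _ (le_n _))).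
 pose proof (Hsep (s N) (s (S N)) (Hs N)).
 pose proof (n1_sub_triang (u (s (S N))) x (u (s N))).
 pose proof (n1_le_dist (u (s (S N))) x). pose proof (n1_le_dist x (u (s N))). rewrite (dist_sym (u (s (S N))) x) in H3.
 pose proof (pos_INR d).
 assert (INR d * e * 2 < r). { unfold e. apply Rmult_lt_reg_r with (INR d + 1). lra.
   replace (INR d * (r / (2 * (INR d + 1))) * 2 * (INR d + 1)) with (INR d * r) by (field; lra). nra. }
 assert (INR d * dist x (u (s (S N))) <= INR d * e) by (apply Rmult_le_compat_l; lra).
 assert (INR d * dist x (u (s N)) <= INR d * e) by (apply Rmult_le_compat_l; lra).
 lra. Qed.

Lemma maxc_ge_in L n x : In n L -> tc Om n x <= maxc Om L x.
Proof. induction L; simpl. intros []. intros [<-|H]. apply Rmax_l. eapply Rle_trans; [|apply Rmax_r]. auto. Qed.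

Lemma approx_pos g : C0 Om g -> (forall x, 0 <= g x) -> forall eps, 0 < eps ->
  exists L, forall x, Rabs (g x - maxc Om L x) <= 3 * eps.
Proof. intros Hg Hpos eps He. pose proof Hg as [Hg0 [_ Hginf]].
 destruct (Hginf eps He) as [K [HK [HKO HKb]]].
 destruct (compact_margin Om K HO HK HKO) as [rho [Hrho Hm]].
 destruct (C0_unif Om g K Hg HK HKO eps He) as [du [Hdu Hu]].
 set (r0 := Rmin rho du / 2). assert (Hr0 : 0 < r0) by (unfold r0; pose proof (Rmin_pos _ _ Hrho Hdu); lra).
 destruct (inv_small r0 Hr0) as [N HN]. specialize (HN N (le_n _)).
 set (del := / INR (S N)). assert (Hdel : 0 < del) by (apply Rinv_0_lt_compat, lt_0_INR; lia). fold del in HN.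
 assert (Hr0r : r0 <= rho / 2) by (unfold r0; pose proof (Rmin_l rho du); lra).
 assert (Hr0d : r0 <= du / 2) by (unfold r0; pose proof (Rmin_r rho du); lra).
 set (Good := fun n => valid Om (fst (fst (@data d n))) (snd (fst (@data d n))) /\
     forall y, n1 (vsub y (fst (fst (@data d n)))) < snd (fst (@data d n)) -> snd (@data d n) < g y).
 set (Low := fun p n => snd (fst (@data d n)) = del /\ n1 (vsub p (fst (fst (@data d n)))) < del / 4 /\ g p - 2 * eps < snd (@data d n)).
 assert (Hcl : forall p, K p -> exists n, Good n /\ Low p n).
 { intros p Kp. assert (Hd4 : 0 < del / 4) by lra.
   destruct (decV_dense_n1 d p _ Hd4) as [a Ha]. assert (He2 : 0 < eps / 2) by lra.
   destruct (decR_dense (g p - 3 * eps / 2) _ He2) as [b Hb].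
   exists (Cantor.to_nat (a, Cantor.to_nat (N, b))). unfold Good, Low. rewrite data_code. cbn [fst snd].
   fold del. rewrite n1_sub_sym in Ha.
   assert (Hnear : forall y, n1 (vsub y (decV d a)) <= del -> dist p y < rho /\ dist p y < du).
   { intros y Hy. pose proof (n1_sub_triang y (decV d a) p). rewrite (n1_sub_sym y p), (n1_sub_sym (decV d a) p) in H.
     assert (n1 (vsub p y) < 2 * r0) by lra. split; apply n1_lt_dist; lra. }
   apply Rabs_lt_between' in Hb. split; [split; [split|]|split; [|split]]; auto.
   - intros y Hy. apply (Hm p y Kp). apply Hnear; auto.
   - intros y Hy. assert (Hy' : n1 (vsub y (decV d a)) <= del) by lra.
     destruct (Hnear y Hy'). assert (Om y) by (apply (Hm p y Kp); auto).
     pose proof (Hu p y Kp H1 H0). apply Rabs_lt_between' in H2. lra.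
   - lra. }
 destruct (net K (del / 4) HK ltac:(lra)) as [P [HP1 HP2]].
 assert (HL : exists L, (forall n, In n L -> Good n) /\ forall p, In p P -> exists n, In n L /\ Low p n).
 { clear HP2. induction P as [|p P IH].
   - exists nil. split. intros n []. intros p [].
   - destruct IH as [L [HL1 HL2]]. intros q Hq; apply HP1; right; auto.
     destruct (Hcl p (HP1 p (or_introl eq_refl))) as [n [Gn Ln]].
     exists (cons n L). split. intros m [<-|Hm']; auto.
     intros q [<-|Hq]. exists n; split; auto. left; auto. destruct (HL2 q Hq) as [m [Hm1 Hm2]]. exists m; split; auto. right; auto. }
 destruct HL as [L [HL1 HL2]]. exists L. intros x.
 assert (Hup : maxc Om L x <= g x).
 { clear HL2. induction L as [|n L IH]; simpl. apply Hpos. apply Rmax_lub.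
   - destruct (HL1 n (or_introl eq_refl)) as [Hv Hh]. unfold tc. rewrite tcone_val by auto. unfold cone.
     destruct (Rlt_dec (n1 (vsub x (fst (fst (@data d n))))) (snd (fst (@data d n)))) as [Hl|Hl].
     + specialize (Hh x Hl). pose proof (fac_01 (snd (fst (@data d n))) (n1 (vsub x (fst (fst (@data d n)))))).
       pose proof (Hpos x). destruct (Rle_dec 0 (snd (@data d n))); nra.
     + rewrite fac_zero. rewrite Rmult_0_r; apply Hpos. apply Hv. lra.
   - apply IH. intros m Hmm; apply HL1; right; auto. }
 assert (Hlow : g x - 3 * eps <= maxc Om L x).
 { destruct (classic (K x)) as [Kx|nKx].
   - destruct (HP2 x Kx) as [p [Hp Hxp]]. destruct (HL2 p Hp) as [n [Hn [Hd [Hpc Hh]]]].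
     eapply Rle_trans; [|apply (maxc_ge_in L n x Hn)].
     destruct (HL1 n Hn) as [Hv _]. unfold tc. rewrite tcone_val by auto. unfold cone.
     rewrite fac_one. 2: { destruct Hv; auto. }
     2: { pose proof (n1_sub_triang x p (fst (fst (@data d n)))). rewrite Hd. lra. }
     assert (Hdp : dist p x < du). { apply n1_lt_dist. rewrite n1_sub_sym. lra. }
     pose proof (Hu p x (HP1 p Hp) (HKO x Kx) Hdp). apply Rabs_lt_between' in H. lra.
   - pose proof (maxc_ge0 Om L x). destruct (classic (Om x)).
     + specialize (HKb x H0 nKx). pose proof (Rle_abs (g x)). lra.
     + rewrite Hg0 by auto. lra. }
 apply Rabs_le. lra. Qed.

End Approx.


Lemma cv_const u c : (forall k, u k = c) -> Un_cv u c.
Proof. intros H eps He. exists O. intros; unfold Rdist; rewrite H, Rminus_eq_0, Rabs_R0; auto. Qed.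

Lemma cv_ext u v l : (forall k, u k = v k) -> Un_cv u l -> Un_cv v l.
Proof. intros H Hu eps He. destruct (Hu eps He) as [N HN]. exists N. intros; rewrite <- H; auto. Qed.

Lemma cv_le_bound u l M : Un_cv u l -> (forall k, u k <= M) -> l <= M.
Proof. intros H Hb. apply Rnot_lt_le. intros Hl. destruct (H (l - M)) as [N HN]. lra.
 specialize (HN N (le_n _)). specialize (Hb N). unfold Rdist in HN. pose proof (Rle_abs (-(u N - l))). rewrite Rabs_Ropp in H0. lra. Qed.

Lemma cv_ge_bound u l M : Un_cv u l -> (forall k, M <= u k) -> M <= l.
Proof. intros H Hb. apply Rnot_lt_le. intros Hl. destruct (H (M - l)) as [N HN]. lra.
 specialize (HN N (le_n _)). specialize (Hb N). unfold Rdist in HN. pose proof (Rle_abs (u N - l)). lra. Qed.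

Lemma cv_abs_bound u l M : Un_cv u l -> (forall k, Rabs (u k) <= M) -> Rabs l <= M.
Proof. intros H Hb. apply Rabs_le. split.
 apply (cv_ge_bound u); auto. intros k; specialize (Hb k). apply Rabs_le_b in Hb. lra.
 apply (cv_le_bound u); auto. intros k; specialize (Hb k). apply Rabs_le_b in Hb. lra. Qed.

Section WS.
Context {d : nat} (Om : vec d -> Prop) (HO : is_open Om).

Lemma density phi : C0 Om phi -> forall eps, 0 < eps -> exists j, forall x, Rabs (phi x - T Om j x) <= eps.
Proof. intros Hphi eps He.
 assert (Hp : C0 Om (fun x => Rmax (phi x) 0)).
 { apply (C0_comp1 Om (fun a => Rmax a 0)). unfold Rmax; destruct Rle_dec; lra.
   intros a b. pose proof (Rmax_lip a 0 b 0). rewrite Rminus_0_r, Rabs_R0 in H. lra. auto. }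
 assert (Hm : C0 Om (fun x => Rmax (- phi x) 0)).
 { apply (C0_comp1 Om (fun a => Rmax (- a) 0)). unfold Rmax; destruct Rle_dec; lra.
   intros a b. pose proof (Rmax_lip (-a) 0 (-b) 0). rewrite Rminus_0_r, Rabs_R0 in H.
   replace (- a - - b) with (- (a - b)) in H by ring. rewrite Rabs_Ropp in H. lra. auto. }
 destruct (approx_pos Om HO _ Hp (fun x => Rmax_r _ _) (eps / 6) ltac:(lra)) as [L1 H1].
 destruct (approx_pos Om HO _ Hm (fun x => Rmax_r _ _) (eps / 6) ltac:(lra)) as [L2 H2].
 destruct (decList_surj L1) as [k1 Hk1]. destruct (decList_surj L2) as [k2 Hk2].
 exists (Cantor.to_nat (k1, k2)). intros x. unfold T. rewrite Cantor.cancel_of_to. rewrite Hk1, Hk2.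
 specialize (H1 x). specialize (H2 x).
 replace (phi x) with (Rmax (phi x) 0 - Rmax (- phi x) 0) by (unfold Rmax; repeat destruct Rle_dec; lra).
 replace (Rmax (phi x) 0 - Rmax (- phi x) 0 - (maxc Om L1 x - maxc Om L2 x)) with
   ((Rmax (phi x) 0 - maxc Om L1 x) - (Rmax (- phi x) 0 - maxc Om L2 x)) by ring.
 eapply Rle_trans. apply Rabs_triang. rewrite Rabs_Ropp. lra. Qed.

Theorem weak_star_compact (mus : nat -> meas d) B : (forall k, IsMeas Om (mus k)) -> (forall k, mnorm Om (mus k) <= B) ->
  exists s mu, strictly_increasing s /\ IsMeas Om mu /\ weakstar_cv Om (fun k => mus (s k)) mu.
Proof. intros Hmu HB.
 assert (HB0 : 0 <= B). { eapply Rle_trans. apply (mnorm_nonneg Om (mus O) (Hmu O)). auto. }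
 assert (HM : forall j, exists M, forall x, Rabs (T Om j x) <= M). { intros j. apply (C0_bounded Om). apply T_C0. }
 destruct (choice_seq _ HM) as [M HMj].
 destruct (diag (fun j k => mus k (T Om j)) (fun j => B * M j)) as [s [Hs Hcv]].
 { intros j k. eapply Rle_trans. apply (meas_bound Om (mus k) (Hmu k)). apply T_C0. apply HMj.
   apply Rmult_le_compat_r. eapply Rle_trans. apply Rabs_pos. apply (HMj j (fun _ => 0)). auto. }
 assert (Hcauchy : forall phi, C0 Om phi -> exists l, Un_cv (fun k => mus (s k) phi) l).
 { intros phi Hphi. destruct (R_complete (fun k => mus (s k) phi)) as [l Hl]. 2: { exists l; auto. }
   intros eps He. set (e := eps / (3 * (B + 1))).
   assert (Hep : 0 < e) by (unfold e; apply Rdiv_lt_0_compat; lra).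
   destruct (density phi Hphi e Hep) as [j Hj].
   destruct (Hcv j) as [lj Hlj]. pose proof (CV_Cauchy _ (exist _ lj Hlj)) as Hc.
   destruct (Hc (eps / 3) ltac:(lra)) as [N HN]. exists N. intros n m Hn Hm. specialize (HN n m Hn Hm).
   assert (Hd : forall k, Rabs (mus (s k) phi - mus (s k) (T Om j)) <= B * e).
   { intros k. rewrite <- (meas_sub Om _ (Hmu (s k))); auto. 2: apply T_C0.
     eapply Rle_trans. apply (meas_bound Om _ (Hmu (s k))). apply C0_sub; auto. apply T_C0. apply Hj.
     apply Rmult_le_compat_r. lra. auto. }
   assert (B * e < eps / 3). { unfold e. apply Rmult_lt_reg_r with (3 * (B + 1)). lra.
     replace (B * (eps / (3 * (B + 1))) * (3 * (B + 1))) with (B * eps) by (field; lra). nra. }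
   unfold Rdist in *. pose proof (Hd n). pose proof (Hd m).
   replace (mus (s n) phi - mus (s m) phi) with ((mus (s n) phi - mus (s n) (T Om j)) + (mus (s n) (T Om j) - mus (s m) (T Om j)) - (mus (s m) phi - mus (s m) (T Om j))) by ring.
   set (a1 := mus (s n) phi - mus (s n) (T Om j)) in *. set (a2 := mus (s n) (T Om j) - mus (s m) (T Om j)) in *.
   set (a3 := mus (s m) phi - mus (s m) (T Om j)) in *.
   pose proof (Rabs_triang (a1 + a2) (- a3)) as T1. pose proof (Rabs_triang a1 a2) as T2. rewrite Rabs_Ropp in T1. unfold Rminus. lra. }
 set (lim := fun phi => match excluded_middle_informative (C0 Om phi) with
        | left H => proj1_sig (constructive_indefinite_description _ (Hcauchy phi H)) | right _ => 0 end).
 assert (Hlim : forall phi, C0 Om phi -> Un_cv (fun k => mus (s k) phi) (lim phi)).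
 { intros phi H. unfold lim. destruct excluded_middle_informative; [|contradiction].
   exact (proj2_sig (constructive_indefinite_description _ (Hcauchy phi c))). }
 exists s, lim. split; auto. split; [split; [|split]|].
 - intros phi H. unfold lim. destruct excluded_middle_informative; auto. contradiction.
 - intros phi psi c H1 H2. apply (UL_sequence (fun k => mus (s k) (fun x => phi x + c * psi x))).
   apply Hlim. apply C0_lin; auto.
   apply (cv_ext (fun k => mus (s k) phi + (fun _ => c) k * mus (s k) psi)).
   intros k. rewrite (meas_lin Om _ (Hmu (s k))); auto.
   apply CV_plus. apply Hlim; auto. apply CV_mult. apply cv_const; auto. apply Hlim; auto.
 - exists B. intros phi r H1 H2. apply (cv_abs_bound (fun k => mus (s k) phi)). apply Hlim; auto.
   intros k. eapply Rle_trans. apply (meas_bound Om _ (Hmu (s k))); eauto.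
   apply Rmult_le_compat_r; auto. eapply Rle_trans. apply Rabs_pos. apply (H2 (fun _ => 0)).
 - intros phi H. apply Hlim; auto. Qed.
End WS.


Lemma fsum_cv n (g : nat -> Fin.t n -> R) (l : Fin.t n -> R) : (forall i, Un_cv (fun k => g k i) (l i)) ->
  Un_cv (fun k => fsum n (g k)) (fsum n l).
Proof. revert g l; induction n; intros g l H; simpl. apply cv_const; auto.
 apply CV_plus. apply H. apply (IHn (fun k i => g k (Fin.FS i))). intros; apply H. Qed.

Lemma dot_cv {n} (q : nat -> vec n) (ql : vec n) y : vec_cv q ql -> Un_cv (fun k => dot (q k) y) (dot ql y).
Proof. intros H. unfold dot. apply (fsum_cv n (fun k i => q k i * y i)). intros i.
 apply CV_mult. apply H. apply cv_const; auto. Qed.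

Definition ev {n} (i : Fin.t n) : vec n := fun j => if Fin.eq_dec j i then 1 else 0.

Lemma fsum_delta n (q : Fin.t n -> R) i : fsum n (fun j => q j * (if Fin.eq_dec j i then 1 else 0)) = q i.
Proof. revert q i; induction n; intros q i. inversion i.
 simpl. refine (Fin.caseS' i (fun i => q Fin.F1 * (if Fin.eq_dec Fin.F1 i then 1 else 0) + fsum n (fun j => q (Fin.FS j) * (if Fin.eq_dec (Fin.FS j) i then 1 else 0)) = q i) _ _).
 - destruct (Fin.eq_dec Fin.F1 Fin.F1) as [_|C]; [|congruence].
   rewrite (fsum_ext n _ (fun _ => 0)). rewrite fsum_zero. ring.
   intros j. destruct (Fin.eq_dec (Fin.FS j) Fin.F1) as [C|_]. inversion C. ring.
 - intros p. destruct (Fin.eq_dec Fin.F1 (Fin.FS p)) as [C|_]. inversion C.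
   rewrite <- (IHn (fun j => q (Fin.FS j)) p). rewrite Rmult_0_r, Rplus_0_l. apply fsum_ext. intros j.
   destruct (Fin.eq_dec (Fin.FS j) (Fin.FS p)) as [E|E]; destruct (Fin.eq_dec j p) as [E'|E']; auto.
   + exfalso; apply E'. apply Fin.FS_inj; auto.
   + exfalso; apply E. subst; auto. Qed.

Lemma dot_ev {n} (q : vec n) i : dot q (ev i) = q i.
Proof. apply fsum_delta. Qed.

Lemma dot_ev_neg {n} (q : vec n) i : dot q (vscale (-1) (ev i)) = - q i.
Proof. unfold dot, vscale. rewrite <- (dot_ev q i). unfold dot. rewrite <- (Rmult_1_l (fsum n _)).
 replace 1 with (-(-1)) by ring. rewrite Ropp_mult_distr_l_reverse, <- fsum_scal. f_equal. apply fsum_ext; intros; ring. Qed.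

Lemma fstar_ub {m} (f : vec m -> ereal) q F y w : fstar f q = Some F -> f y = Some w -> dot q y - w <= F.
Proof. intros H1 H2. apply (esup_some_ub _ _ _ H1). exists y, w; auto. Qed.

Lemma fstar_le {m} (f : vec m -> ereal) q b : proper f -> (forall y w, f y = Some w -> dot q y - w <= b) ->
  exists F, fstar f q = Some F /\ F <= b.
Proof. intros [y [v Hy]] H. apply esup_bound. exists (dot q y - v), y, v; auto.
 intros r [y' [w [Hw ->]]]. apply H; auto. Qed.

Lemma Jfun_some {d m} (Om : vec d -> Prop) a (f : vec m -> ereal) mu v : Jfun Om a f mu = Some v ->
  exists w, f (Aop a mu) = Some w /\ v = mnorm Om mu + w.
Proof. unfold Jfun. destruct (f (Aop a mu)) as [w|]; intros H; inversion H. eauto. Qed.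

Lemma Jfun_of {d m} (Om : vec d -> Prop) a (f : vec m -> ereal) mu w : f (Aop a mu) = Some w ->
  Jfun Om a f mu = Some (mnorm Om mu + w).
Proof. unfold Jfun. intros ->. auto. Qed.

Lemma meas_Astar {d m} (Om : vec d -> Prop) mu (a : Fin.t m -> vec d -> R) q : IsMeas Om mu -> (forall i, C0 Om (a i)) ->
  mu (Astar a q) = dot q (Aop a mu).
Proof. intros Hmu Ha. unfold Astar, dot, Aop. revert a Ha q. induction m; intros a Ha q; simpl.
 apply (meas_zero Om mu Hmu).
 rewrite <- (IHm (fun i => a (Fin.FS i)) (fun i => Ha _) (fun i => q (Fin.FS i))).
 rewrite <- (meas_scal Om mu Hmu _ _ (Ha Fin.F1)).
 rewrite <- (meas_add Om mu Hmu). auto. apply C0_scal; auto.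
 apply (C0_Astar Om (fun i => a (Fin.FS i)) (fun i => q (Fin.FS i))). intros; apply Ha. Qed.

Lemma supp_bound {d} (Om : vec d -> Prop) mu O' psi : IsMeas Om mu -> supported_in Om mu O' -> C0 Om psi ->
  (forall x, O' x -> Rabs (psi x) <= 1) -> mu psi <= mnorm Om mu.
Proof. intros Hmu Hs Hpsi H1. destruct (C0_bounded Om psi Hpsi) as [M0 HM0]. set (M := Rabs M0 + 1).
 assert (HM : forall x, Rabs (psi x) <= M). { intros x. pose proof (HM0 x). pose proof (Rle_abs M0). unfold M; lra. }
 assert (HMp : 0 < M) by (unfold M; pose proof (Rabs_pos M0); lra).
 pose proof (mnorm_nonneg Om mu Hmu) as Hn.
 assert (Key : forall eps, 0 < eps -> eps < 1 -> mu psi <= mnorm Om mu * (1 + eps) + M * eps).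
 { intros eps He He1. destruct (Hs eps He) as [U [HU [HEU HUb]]]. set (c := 1 + eps).
   set (g := fun a => Rmax (- c) (Rmin c a)).
   assert (Hg0 : g 0 = 0) by (unfold g, Rmax, Rmin, c; repeat destruct Rle_dec; lra).
   assert (Hgl : forall a b, Rabs (g a - g b) <= Rabs (a - b)).
   { intros a b. unfold g, Rmax, Rmin. pose proof (Rle_abs (a-b)). pose proof (Rle_abs (-(a-b))). rewrite Rabs_Ropp in H0.
     repeat destruct Rle_dec; apply Rabs_le; lra. }
   assert (Hp1 : C0 Om (fun x => g (psi x))) by (apply C0_comp1; auto).
   assert (Hp2 : C0 Om (fun x => / M * (psi x - g (psi x)))) by (apply C0_scal, C0_sub; auto).
   assert (Hb1 : Rabs (mu (fun x => g (psi x))) <= mnorm Om mu * c).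
   { apply meas_bound; auto. intros x. unfold g, Rmax, Rmin, c. repeat destruct Rle_dec; apply Rabs_le; lra. }
   assert (Hb2 : mu (fun x => / M * (psi x - g (psi x))) <= eps).
   { apply HUb; auto.
     - intros x. rewrite Rabs_mult, Rabs_inv, (Rabs_right M) by lra.
       apply Rmult_le_reg_l with M; auto. rewrite <- Rmult_assoc, Rinv_r, Rmult_1_l, Rmult_1_r by lra.
       pose proof (HM x). unfold g, Rmax, Rmin, c in *. pose proof (Rle_abs (psi x)). pose proof (Rle_abs (- psi x)). rewrite Rabs_Ropp in H2.
       repeat destruct Rle_dec; apply Rabs_le; lra.
     - intros x Hx. assert (Hpx : psi x = g (psi x) \/ (Om x /\ ~ O' x)).
       { destruct (classic (Om x)) as [Ho|Ho].
         - destruct (classic (O' x)) as [Hq|Hq]. left. specialize (H1 x Hq). apply Rabs_le_b in H1.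
           unfold g, Rmax, Rmin, c; repeat destruct Rle_dec; lra. right; auto.
         - left. rewrite (proj1 Hpsi x Ho). auto. }
       destruct Hpx as [E|E]. rewrite <- E. ring. exfalso; apply Hx, HEU; auto. }
   rewrite (meas_scal Om mu Hmu) in Hb2 by (apply C0_sub; auto).
   rewrite (meas_sub Om mu Hmu) in Hb2 by auto.
   assert (mu psi - mu (fun x => g (psi x)) <= M * eps).
   { apply Rmult_le_reg_l with (/ M). apply Rinv_0_lt_compat; auto.
     replace (/ M * (M * eps)) with eps by (field; lra). auto. }
   pose proof (Rle_abs (mu (fun x => g (psi x)))). unfold c in *. lra. }
 apply Rnot_lt_le. intros Hl. set (g := mu psi - mnorm Om mu).
 set (eps := Rmin (1/2) (g / (2 * (mnorm Om mu + M)))).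
 assert (He : 0 < eps). { unfold eps. apply Rmin_pos. lra. apply Rdiv_lt_0_compat. unfold g; lra. lra. }
 assert (He1 : eps < 1). { unfold eps. pose proof (Rmin_l (1/2) (g / (2 * (mnorm Om mu + M)))). lra. }
 specialize (Key eps He He1).
 assert (eps * (mnorm Om mu + M) <= g / 2).
 { unfold eps. pose proof (Rmin_r (1/2) (g / (2 * (mnorm Om mu + M)))).
   apply Rle_trans with (g / (2 * (mnorm Om mu + M)) * (mnorm Om mu + M)). apply Rmult_le_compat_r; lra.
   right. field. lra. }
 unfold g in *. nra. Qed.


Section Main.
Context (d m : nat) (Om : vec d -> Prop) (HOm_open : is_open Om)
  (a : Fin.t m -> vec d -> R) (Ha : forall i, C0 Om (a i))
  (f : vec m -> ereal) (Hf_proper : proper f) (Hf_lsc : lsc f) (Hf_bdd : bounded_below f)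
  (Oms : nat -> vec d -> Prop) (mus : nat -> meas d) (qs : nat -> vec m)
  (HOm0 : forall x, Oms O x -> Om x)
  (Hmus : forall k, solP Om a f (Oms k) (mus k))
  (Hqs : forall k, solD a f (Oms k) (qs k))
  (Hgap_k : forall k, no_gap Om a f (mus k) (qs k))
  (mus_ qs_ : _) (Hmus_ : solP Om a f Om mus_) (Hqs_ : solD a f Om qs_) (Hgap_ : no_gap Om a f mus_ qs_)
  (Hstep : forall k x, Oms (S k) x <-> (Oms k x \/ Xset Om a (qs k) x))
  (Hyp : H1 f \/ H2 Om a (Oms O))
  (v : nat -> R) (Hv : forall k, Jfun Om a f (mus k) = Some (v k) /\ fstar f (qs k) = Some (- v k))
  (vs : R) (Hvs : Jfun Om a f mus_ = Some vs /\ fstar f qs_ = Some (- vs)).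

Lemma Oms_Om k x : Oms k x -> Om x.
Proof. revert x; induction k; intros x Hx. auto. apply Hstep in Hx. destruct Hx as [Hx|[Hx _]]; auto. Qed.

Lemma Oms_mono k n x : (k <= n)%nat -> Oms k x -> Oms n x.
Proof. induction 1; auto. intros Hx. apply Hstep. left; auto. Qed.

Lemma vals : exists v : nat -> R, forall k, Jfun Om a f (mus k) = Some (v k) /\ fstar f (qs k) = Some (- v k).
Proof. apply (choice_seq (fun k v => Jfun Om a f (mus k) = Some v /\ fstar f (qs k) = Some (- v))). intros k. apply Hgap_k. Qed.


Lemma v_dec k : v (S k) <= v k.
Proof. destruct (Hmus (S k)) as [_ [_ Hopt]]. destruct (Hmus k) as [Hm [Hs _]].
 specialize (Hopt (mus k) Hm). rewrite (proj1 (Hv k)), (proj1 (Hv (S k))) in Hopt. apply Hopt.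
 apply (supported_mono Om (mus k) (Oms k)); auto. intros x; apply Oms_mono; lia. Qed.

Lemma v_mono k n : (k <= n)%nat -> v n <= v k.
Proof. induction 1. lra. pose proof (v_dec m0). lra. Qed.

Lemma v_ge k : vs <= v k.
Proof. destruct Hmus_ as [_ [_ Hopt]]. destruct (Hmus k) as [Hm _].
 specialize (Hopt (mus k) Hm (supported_full Om _ Hm)). rewrite (proj1 (Hv k)), (proj1 Hvs) in Hopt. apply Hopt. Qed.

Lemma mnorm_bnd : exists B, forall k, mnorm Om (mus k) <= B.
Proof. destruct Hf_bdd as [b Hb]. exists (v O - b). intros k. destruct (Jfun_some Om a f (mus k) (v k) (proj1 (Hv k))) as [w [Hw Hvw]].
 pose proof (Hb _ _ Hw). pose proof (v_mono O k (Nat.le_0_l k)). lra. Qed.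

Lemma fenchel_k k y w : f y = Some w -> dot (qs k) y - w <= - vs.
Proof. intros Hw. pose proof (fstar_ub f (qs k) _ y w (proj2 (Hv k)) Hw). pose proof (v_ge k). lra. Qed.

Lemma qbound_gen (Up Um : Fin.t m -> R) : (forall k i, qs k i <= Up i) -> (forall k i, - qs k i <= Um i) ->
  exists Q, forall k i, Rabs (qs k i) <= Q.
Proof. intros H1' H2'. exists (fsum m (fun i => Rabs (Up i) + Rabs (Um i))). intros k i.
 eapply Rle_trans; [|apply (fsum_single m (fun i => Rabs (Up i) + Rabs (Um i)) i)].
 2: { intros j; pose proof (Rabs_pos (Up j)); pose proof (Rabs_pos (Um j)); lra. }
 pose proof (H1' k i). pose proof (H2' k i). pose proof (Rle_abs (Up i)). pose proof (Rle_abs (Um i)).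
 pose proof (Rabs_pos (Up i)). pose proof (Rabs_pos (Um i)). apply Rabs_le; lra. Qed.

Lemma q_bnd : exists Q, forall k i, Rabs (qs k i) <= Q.
Proof. destruct Hyp as [[fr [g [L [HL [Hfr _]]]]] | HH2].
 - apply (qbound_gen (fun i => fr (ev i) - vs) (fun i => fr (vscale (-1) (ev i)) - vs)).
   + intros k i. pose proof (fenchel_k k (ev i) _ (Hfr (ev i))). rewrite dot_ev in H. lra.
   + intros k i. pose proof (fenchel_k k _ _ (Hfr (vscale (-1) (ev i)))). rewrite dot_ev_neg in H. lra.
 - destruct (choice_gen _ HH2) as [nu Hnu].
   assert (Hb : forall k y, dot (qs k) y <= mnorm Om (nu y)).
   { intros k y. destruct (Hnu y) as [Hm [Hs HA]].
     replace y with (Aop a (nu y)) at 1 by (apply functional_extensionality; auto).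
     rewrite <- (meas_Astar Om (nu y) a (qs k) Hm Ha).
     apply (supp_bound Om (nu y) (Oms O)); auto. apply C0_Astar; auto.
     intros x Hx. apply (proj1 (Hqs k)). apply (Oms_mono O k); auto; lia. }
   apply (qbound_gen (fun i => mnorm Om (nu (ev i))) (fun i => mnorm Om (nu (vscale (-1) (ev i))))).
   + intros k i. rewrite <- dot_ev. apply Hb.
   + intros k i. rewrite <- dot_ev_neg. apply Hb. Qed.


Lemma a_bnd : exists M : Fin.t m -> R, forall i x, Rabs (a i x) <= M i.
Proof. apply (choice_gen (fun i M => forall x, Rabs (a i x) <= M)). intros i. apply (C0_bounded Om). apply Ha. Qed.

Definition Dq (M : Fin.t m -> R) (q q' : vec m) : R := fsum m (fun i => Rabs (q i - q' i) * M i).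

Lemma Astar_diff (M : Fin.t m -> R) (HM : forall i x, Rabs (a i x) <= M i) q q' x :
  Rabs (Astar a q x - Astar a q' x) <= Dq M q q'.
Proof. unfold Astar, Dq. rewrite <- (Rmult_1_l (fsum m (fun i => q' i * a i x))), <- fsum_scal.
 replace (fsum m (fun i => q i * a i x) - fsum m (fun i => 1 * (q' i * a i x))) with
   (fsum m (fun i => q i * a i x) + (-1) * fsum m (fun i => 1 * (q' i * a i x))) by ring.
 rewrite <- fsum_scal, <- fsum_plus. eapply Rle_trans. apply fsum_abs. apply fsum_le. intros i.
 replace (q i * a i x + -1 * (1 * (q' i * a i x))) with ((q i - q' i) * a i x) by ring.
 rewrite Rabs_mult. apply Rmult_le_compat_l. apply Rabs_pos. apply HM. Qed.

Lemma Dq_triang (M : Fin.t m -> R) (HM : forall i x, Rabs (a i x) <= M i) q q' r :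
  Dq M q q' <= Dq M q r + Dq M q' r.
Proof. unfold Dq. rewrite <- fsum_plus. apply fsum_le. intros i.
 assert (0 <= M i) by (eapply Rle_trans; [apply Rabs_pos|apply (HM i (fun _ => 0))]).
 pose proof (Rabs_triang (q i - r i) (- (q' i - r i))). rewrite Rabs_Ropp in H0.
 replace (q i - r i + - (q' i - r i)) with (q i - q' i) in H0 by ring. nra. Qed.

Lemma Dq_cv (M : Fin.t m -> R) (qq : nat -> vec m) ql : vec_cv qq ql -> Un_cv (fun k => Dq M (qq k) ql) 0.
Proof. intros H. unfold Dq. rewrite <- (fsum_zero m). rewrite (fsum_ext m (fun _ => 0) (fun i => 0 * M i)) by (intros; ring).
 apply (fsum_cv m (fun k i => Rabs (qq k i - ql i) * M i)). intros i. apply CV_mult; [|apply cv_const; auto].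
 intros eps He. destruct (H i eps He) as [N HN]. exists N. intros n Hn. specialize (HN n Hn). unfold Rdist in *.
 rewrite Rminus_0_r, Rabs_Rabsolu. auto. Qed.

Lemma q_feas (s : nat -> nat) ql : strictly_increasing s -> vec_cv (fun k => qs (s k)) ql -> feasD a Om ql.
Proof. intros Hs Hq x0 Hx0. apply Rnot_lt_le. intros Hgt. set (eta := Rabs (Astar a ql x0) - 1).
 destruct a_bnd as [M HM].
 destruct (Dq_cv M _ _ Hq (eta / 4)) as [N HN]. unfold eta; lra.
 set (q := qs (s N)). set (q' := qs (s (S N))).
 assert (HD1 : Dq M q ql < eta / 4). { pose proof (HN N (le_n _)). unfold Rdist in H. rewrite Rminus_0_r in H. pose proof (Rle_abs (Dq M q ql)). fold q in H; lra. }
 assert (HD2 : Dq M q' ql < eta / 4). { pose proof (HN (S N) (le_S _ _ (le_n _))). unfold Rdist in H. rewrite Rminus_0_r in H. pose proof (Rle_abs (Dq M q' ql)). fold q' in H; lra. }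
 pose proof (Astar_diff M HM q ql x0) as Hx0d.
 pose proof (Rabs_triang_inv (Astar a ql x0) (Astar a q x0)) as Ht. rewrite Rabs_minus_sym in Ht.
 assert (Hq0 : 1 + 3 * eta / 4 < Rabs (Astar a q x0)) by (unfold eta in *; lra).
 destruct (C0_max Om (Astar a q) x0 (C0_Astar Om a q Ha) Hx0) as [x [Hx Hmax]]. unfold eta in *; lra.
 assert (HX : Xset Om a q x).
 { split; auto. split. pose proof (Hmax x0). unfold eta in *; lra. exists 1. split. lra. intros y _ _. apply Hmax. }
 assert (HO : Oms (s (S N)) x).
 { apply (Oms_mono (S (s N))). apply Hs. apply Hstep. right. exact HX. }
 pose proof (proj1 (Hqs (s (S N))) x HO) as Hf. fold q' in Hf.
 pose proof (Astar_diff M HM q q' x). pose proof (Dq_triang M HM q q' ql).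
 pose proof (Rabs_triang_inv (Astar a q x) (Astar a q' x)). pose proof (Hmax x0). lra. Qed.

Lemma fstar_lim (s : nat -> nat) ql c : vec_cv (fun k => qs (s k)) ql -> (forall k, c <= v (s k)) ->
  exists F, fstar f ql = Some F /\ F <= - c.
Proof. intros Hq Hc. apply fstar_le; auto. intros y w Hw.
 apply (cv_le_bound (fun k => dot (qs (s k)) y - w)). apply CV_minus. apply dot_cv; auto. apply cv_const; auto.
 intros k. pose proof (fstar_ub f (qs (s k)) _ y w (proj2 (Hv (s k))) Hw). pose proof (Hc k). lra. Qed.

Lemma v_cv : Un_cv v vs.
Proof. destruct q_bnd as [Q HQ]. destruct (BW_vec qs Q HQ) as [s [ql [Hs Hq]]].
 pose proof (q_feas s ql Hs Hq) as Hfe.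
 intros eps He. assert (exists N, v N < vs + eps).
 { apply NNPP; intros Hn. destruct (fstar_lim s ql (vs + eps) Hq) as [F [HF HFl]].
   intros k. apply Rnot_lt_le. intros Hl. apply Hn; eauto.
   pose proof (proj2 Hqs_ ql Hfe). rewrite (proj2 Hvs), HF in H. simpl in H. lra. }
 destruct H as [N HN]. exists N. intros n Hn. unfold Rdist. pose proof (v_mono N n Hn). pose proof (v_ge n).
 rewrite Rabs_right; lra. Qed.

Lemma main_sub (s0 : nat -> nat) : strictly_increasing s0 ->
  exists t mu_inf q_inf, strictly_increasing t /\
    weakstar_cv Om (fun k => mus (s0 (t k))) mu_inf /\
    vec_cv (fun k => qs (s0 (t k))) q_inf /\
    solP Om a f Om mu_inf /\ solD a f Om q_inf /\
    ecv (fun k => Jfun Om a f (mus (s0 (t k)))) (Jfun Om a f mu_inf).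
Proof. intros Hs0. destruct mnorm_bnd as [B HB].
 destruct (weak_star_compact Om HOm_open (fun k => mus (s0 k)) B) as [t1 [mi [Ht1 [Hmi Hw]]]].
 intros k; apply (Hmus (s0 k)). intros k; apply HB.
 destruct q_bnd as [Q HQ]. destruct (BW_vec (fun k => qs (s0 (t1 k))) Q) as [t2 [ql [Ht2 Hq]]]. intros; apply HQ.
 set (s := fun k => s0 (t1 (t2 k))).
 assert (Hs : strictly_increasing s) by exact (si_comp s0 (fun k => t1 (t2 k)) Hs0 (si_comp t1 t2 Ht1 Ht2)).
 assert (Hw2 : weakstar_cv Om (fun k => mus (s k)) mi).
 { intros phi Hphi. apply (cv_sub (fun k => mus (s0 (t1 k)) phi)); auto. }
 assert (Hfe : feasD a Om ql) by (apply (q_feas s); auto).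
 destruct (fstar_lim s ql vs Hq) as [F [HF HFl]]. intros; apply v_ge.
 assert (HsolD : solD a f Om ql).
 { split; auto. intros q' Hq'. pose proof (proj2 Hqs_ q' Hq'). rewrite (proj2 Hvs) in H. rewrite HF.
   destruct (fstar f q'); simpl in *; auto. lra. }
 assert (HA : vec_cv (fun k => Aop a (mus (s k))) (Aop a mi)). { intros i. apply Hw2. apply Ha. }
 assert (Hmn : forall eps, 0 < eps -> exists N, forall k, (N <= k)%nat -> mnorm Om mi - eps < mnorm Om (mus (s k))).
 { intros eps He. destruct (esup_approx _ _ (eps/2) (mnorm_some Om mi Hmi) ltac:(lra)) as [r [[phi [Hphi [Hb ->]]] Hr]].
   destruct (Hw2 phi Hphi (eps/2) ltac:(lra)) as [N HN]. exists N. intros k Hk. specialize (HN k Hk).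
   unfold Rdist in HN. pose proof (Rle_abs (- (mus (s k) phi - mi phi))). rewrite Rabs_Ropp in H.
   pose proof (mnorm_ub Om (mus (s k)) (proj1 (Hmus (s k))) phi Hphi Hb). lra. }
 assert (Hele : forall eps, 0 < eps -> ele (f (Aop a mi)) (Some (vs - mnorm Om mi + 3 * eps))).
 { intros eps He. apply NNPP; intros Hn. destruct (Hf_lsc _ _ Hn) as [del [Hdel Hdl]].
   destruct (vec_cv_dcv _ _ HA del Hdel) as [N1 HN1]. destruct (Hmn eps He) as [N2 HN2].
   destruct (v_cv eps He) as [N3 HN3].
   set (k := max N1 (max N2 N3)).
   specialize (HN1 k ltac:(unfold k; lia)). specialize (HN2 k ltac:(unfold k; lia)).
   specialize (HN3 (s k) ltac:(pose proof (si_ge s Hs k); unfold k in *; lia)).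
   destruct (Jfun_some Om a f _ _ (proj1 (Hv (s k)))) as [w [Hw' Hvw]].
   apply (Hdl _ HN1). rewrite Hw'. simpl. unfold Rdist in HN3. pose proof (Rle_abs (v (s k) - vs)). lra. }
 destruct (f (Aop a mi)) as [W|] eqn:HW. 2: { specialize (Hele 1 Rlt_0_1). simpl in Hele. contradiction. }
 assert (HWle : mnorm Om mi + W <= vs).
 { apply Rnot_lt_le. intros Hl. specialize (Hele ((mnorm Om mi + W - vs) / 6) ltac:(lra)). simpl in Hele. lra. }
 pose proof (Jfun_of Om a f mi W HW) as HJ.
 assert (HJe : mnorm Om mi + W = vs).
 { destruct Hmus_ as [_ [_ Hopt]]. specialize (Hopt mi Hmi (supported_full Om _ Hmi)).
   rewrite (proj1 Hvs), HJ in Hopt. simpl in Hopt. lra. }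
 rewrite HJe in HJ.
 exists (fun k => t1 (t2 k)), mi, ql. split. apply si_comp; auto. split; auto. split; auto. split; [|split; auto].
 - split; auto. split. apply supported_full; auto. intros nu Hnu Hsn. rewrite HJ, <- (proj1 Hvs). apply Hmus_; auto.
 - rewrite HJ. simpl. intros eps He. destruct (v_cv eps He) as [N HN]. exists N. intros n Hn.
   exists (v (s n)). split. apply (proj1 (Hv (s n))). apply HN. pose proof (si_ge s Hs n). lia. Qed.

End Main.


Lemma io_sub (P : nat -> Prop) : (forall N, exists p, (N <= p)%nat /\ P p) ->
  exists s, strictly_increasing s /\ forall k, P (s k).
Proof. intros H. destruct (choice_nat _ H) as [F HF].
 set (s := fix s k := match k with O => F O | S k => F (S (s k)) end).
 exists s. split.
 - intros k. change (s (S k)) with (F (S (s k))). pose proof (proj1 (HF (S (s k)))). lia.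
 - intros k. destruct k. apply (proj2 (HF O)). change (s (S k)) with (F (S (s k))). apply (proj2 (HF _)). Qed.

Lemma not_cv_sub u l : ~ Un_cv u l -> exists eps s, 0 < eps /\ strictly_increasing s /\ forall k, eps <= Rabs (u (s k) - l).
Proof. intros Hn. assert (exists eps, 0 < eps /\ forall N, exists p, (N <= p)%nat /\ eps <= Rabs (u p - l)).
 { apply NNPP; intros Hc. apply Hn. intros eps He. apply NNPP; intros Hc2. apply Hc. exists eps. split; auto.
   intros N. apply NNPP; intros Hc3. apply Hc2. exists N. intros n Hn'. apply Rnot_le_lt. intros Hl. apply Hc3; eauto. }
 destruct H as [eps [He HN]]. destruct (io_sub _ HN) as [s [Hs Hk]]. exists eps, s. auto. Qed.

Theorem mainTheorem1
  (d m : nat) (Hd : (1 <= d)%nat) (Hm : (1 <= m)%nat) (Om : vec d -> Prop)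
  (HOm_open : is_open Om) (HOm_ne : exists x, Om x)
  (a : Fin.t m -> vec d -> R) (Ha : forall i, C0 Om (a i))
  (f : vec m -> ereal)
  (Hf_proper : proper f) (Hf_convex : convex f) (Hf_lsc : lsc f)
  (Hf_bdd : bounded_below f)
  (Oms : nat -> vec d -> Prop) (mus : nat -> meas d) (qs : nat -> vec m)
  (HOm0 : forall x, Oms O x -> Om x)
  (Hmus : forall k, solP Om a f (Oms k) (mus k))
  (Hqs : forall k, solD a f (Oms k) (qs k))
  (Hgap_k : forall k, no_gap Om a f (mus k) (qs k))
  (Hgap : exists mu q, solP Om a f Om mu /\ solD a f Om q /\ no_gap Om a f mu q)
  (Hstep : forall k x, Oms (S k) x <-> (Oms k x \/ Xset Om a (qs k) x))
  (Hyp : H1 f \/ H2 Om a (Oms O)) :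
  (exists (sub : nat -> nat) (mu_inf : meas d) (q_inf : vec m),
      strictly_increasing sub /\
      weakstar_cv Om (fun k => mus (sub k)) mu_inf /\
      vec_cv (fun k => qs (sub k)) q_inf /\
      solP Om a f Om mu_inf /\ solD a f Om q_inf /\
      ecv (fun k => Jfun Om a f (mus (sub k))) (Jfun Om a f mu_inf)) /\
  ((forall mu1 mu2, solP Om a f Om mu1 -> solP Om a f Om mu2 -> mu1 = mu2) ->
     forall mu_star, solP Om a f Om mu_star -> weakstar_cv Om mus mu_star) /\
  ((forall q1 q2, solD a f Om q1 -> solD a f Om q2 -> q1 = q2) ->
     forall q_star, solD a f Om q_star -> vec_cv qs q_star).
Proof.
 destruct Hgap as [mu_ [q_ [HP [HD [vs [Hvs1 Hvs2]]]]]].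
 destruct (choice_seq (fun k w => Jfun Om a f (mus k) = Some w /\ fstar f (qs k) = Some (- w))) as [v Hv].
 { intros k. apply Hgap_k. }
 pose proof (main_sub d m Om HOm_open a Ha f Hf_proper Hf_lsc Hf_bdd Oms mus qs Hmus Hqs mu_ q_ HP HD Hstep Hyp v Hv vs (conj Hvs1 Hvs2)) as MS.
 split; [|split].
 - destruct (MS (fun k => k) si_id) as [t [mi [qi H]]]. exists t, mi, qi. exact H.
 - intros Hu mu_star Hstar phi Hphi. apply NNPP; intros Hn.
   destruct (not_cv_sub _ _ Hn) as [eps [s0 [He [Hs0 Hk]]]].
   destruct (MS s0 Hs0) as [t [mi [qi [Ht [Hw [_ [Hsol _]]]]]]].
   rewrite (Hu mi mu_star Hsol Hstar) in Hw. destruct (Hw phi Hphi eps He) as [N HN].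
   specialize (HN N (le_n _)). specialize (Hk (t N)). unfold Rdist in HN. lra.
 - intros Hu q_star Hstar i. apply NNPP; intros Hn.
   destruct (not_cv_sub _ _ Hn) as [eps [s0 [He [Hs0 Hk]]]].
   destruct (MS s0 Hs0) as [t [mi [qi [Ht [_ [Hq [_ [Hsol _]]]]]]]].
   rewrite (Hu qi q_star Hsol Hstar) in Hq. destruct (Hq i eps He) as [N HN].
   specialize (HN N (le_n _)). specialize (Hk (t N)). unfold Rdist in HN. lra.
Qed.
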